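(* The reduction $\to_{\mathsf{se}}$ is sound: whenever $B\to_{\mathsf{se}}C$ and $\Phi$ is an $\mathsf{SKS}$ derivation with associated atomic flow $B$, there exists an $\mathsf{SKS}$ derivation $\Psi$ with associated atomic flow $C$ and with the same premiss and conclusion as $\Phi$.
   Context: Formulae are built from the units $\mathsf f$ and $\mathsf t$, atoms, disjunction $[\alpha\vee\beta]$ and conjunction $(\alpha\wedge\beta)$; on atoms there is an involution $a\mapsto\bar a$ with $\bar a\neq a$. An inference step of a rule $\alpha/\beta$ rewrites $\xi\{\alpha\}$ into $\xi\{\beta\}$ for an arbitrary context (formula with a hole) $\xi$. A derivation from $\alpha$ (premiss) to $\beta$ (conclusion) is a finite chain of steps from $\alpha$ to $\beta$. System $\mathsf{SKS}$: interaction $\mathsf t/[a\vee\bar a]$; weakening $\mathsf f/a$; contraction $[a\vee a]/a$; cut $(a\wedge\bar a)/\mathsf f$; coweakening $a/\mathsf t$; cocontraction $a/(a\wedge a)$; switch $(\alpha\wedge[\beta\vee\gamma])/[(\alpha\wedge\beta)\vee\gamma]$; medial $[(\alpha\wedge\beta)\vee(\gamma\wedge\delta)]/([\alpha\vee\gamma]\wedge[\beta\vee\delta])$; and $\gamma/\delta$ whenever $\gamma=\delta$ is (either direction of) an instance of commutativity or associativity of $\vee,\wedge$, $[\alpha\vee\mathsf f]=\alpha$, $(\alpha\wedge\mathsf t)=\alpha$, $[\mathsf t\vee\mathsf t]=\mathsf t$, $(\mathsf f\wedge\mathsf f)=\mathsf f$. An atomic flow is a tuple $(V,E,\eta,up,lo)$: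 finite vertex and edge sets, a labelling of vertices by interaction, cut, weakening, coweakening, contraction, cocontraction, and maps $up:E\to V\cup\{\top\}$, $lo:E\to V\cup\{\bot\}$. Upper edges of $\nu$: $lo(\epsilon)=\nu$; lower edges: $up(\epsilon)=\nu$. (Upper, lower) edge numbers: $(0,2)$ interaction, $(2,0)$ cut, $(0,1)$ weakening, $(1,0)$ coweakening, $(2,1)$ contraction, $(1,2)$ cocontraction; no directed cycles; a sign map $\pi:E\to\{+,-\}$ exists giving all edges of a (co)contraction the same sign and the two edges of an interaction/cut different signs. Edges with $up=\top$ ($lo=\bot$) are the upper (lower) edges of the flow. The atomic flow of an $\mathsf{SKS}$ derivation traces atom occurrences: occurrences in contexts and instantiated subformulae of switch, medial, $=$ keep their edge through a step; each step of an atomic rule gives a vertex with that label whose upper edges are the redex occurrences in the step's premiss and lower edges those in its conclusion; occurrences in the premiss/conclusion of the derivation have $up=\top$ / $lo=\bot$. Reduction $\to_{\mathsf{se}}$: let $B$ contain an edge $\epsilon$ from an interaction $\iota$ to a cut $\kappa$; let $\epsilon_2$ be the other lower edge of $\iota$ and $\epsilon_3$ the other upper edge of $\kappa$. Let $A$ be obtained from $B$ by deleting $\iota$, $\kappa$ and $\epsilon$, so that $\epsilon_2$ becomes an upper edge and $\epsilon_3$ a lower edge of $A$; let $\epsilon_1,\dots,\epsilon_h$ be the other upper edges and $\epsilon'_1,\dots,\epsilon'_k$ the other lower edges of $A$. Take disjoint copies $\tilde A$, $\hat A$ of $A$. Then $B\to_{\mathsf{se}}C$ where $C$ is formed by: making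 $\tilde\epsilon_2$ the lower edge of a new weakening; making $\hat\epsilon_3$ the upper edge of a new coweakening; identifying $\tilde\epsilon_3$ and $\hat\epsilon_2$ into a single edge (from the upper endpoint of $\tilde\epsilon_3$ to the lower endpoint of $\hat\epsilon_2$); for each $i\le h$ adding a cocontraction with upper edge $\epsilon_i$ and lower edges $\tilde\epsilon_i,\hat\epsilon_i$; for each $j\le k$ adding a contraction with upper edges $\tilde\epsilon'_j,\hat\epsilon'_j$ and lower edge $\epsilon'_j$. *)

(* Defs.v *)
From mathcomp Require Import all_boot.
Set Implicit Arguments. Unset Strict Implicit. Unset Printing Implicit Defensive.

(* Formulae over a generic type X of "atoms".  Plain SKS formulae use   *)
(* X = A (the atoms); annotated formulae use X = A * E, where the       *)
(* second component names the atomic-flow edge of the occurrence.      *)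
Inductive fml (X : Type) :=
| Ff | Ft | Atm of X | FOr of fml X & fml X | FAnd of fml X & fml X.
Arguments Ff {X}. Arguments Ft {X}.

Fixpoint fmap X Y (f : X -> Y) (a : fml X) : fml Y :=
  match a with
  | Ff => Ff | Ft => Ft | Atm x => Atm (f x)
  | FOr a b => FOr (fmap f a) (fmap f b)
  | FAnd a b => FAnd (fmap f a) (fmap f b)
  end.

Fixpoint fatoms X (a : fml X) : seq X :=
  match a with
  | Ff | Ft => [::] | Atm x => [:: x]
  | FOr a b | FAnd a b => fatoms a ++ fatoms b
  end.

Inductive ctx (X : Type) :=
| Hole
| COrL of ctx X & fml X | COrR of fml X & ctx X
| CAndL of ctx X & fml X | CAndR of fml X & ctx X.
Arguments Hole {X}.

Fixpoint plug X (c : ctx X) (a : fml X) : fml X :=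
  match c with
  | Hole => a
  | COrL c b => FOr (plug c a) b | COrR b c => FOr b (plug c a)
  | CAndL c b => FAnd (plug c a) b | CAndR b c => FAnd b (plug c a)
  end.

Fixpoint cmap X Y (f : X -> Y) (c : ctx X) : ctx Y :=
  match c with
  | Hole => Hole
  | COrL c b => COrL (cmap f c) (fmap f b) | COrR b c => COrR (fmap f b) (cmap f c)
  | CAndL c b => CAndL (cmap f c) (fmap f b) | CAndR b c => CAndR (fmap f b) (cmap f c)
  end.

Inductive eqax := ComOr | ComAnd | AssOr | AssAnd | UnitOr | UnitAnd | TOrT | FAndF.

Definition eq_lhs X (q : eqax) (a b c : fml X) : fml X :=
  match q with
  | ComOr => FOr a b | ComAnd => FAnd a b
  | AssOr => FOr (FOr a b) c | AssAnd => FAnd (FAnd a b) c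
  | UnitOr => FOr a Ff | UnitAnd => FAnd a Ft
  | TOrT => FOr Ft Ft | FAndF => FAnd Ff Ff
  end.
Definition eq_rhs X (q : eqax) (a b c : fml X) : fml X :=
  match q with
  | ComOr => FOr b a | ComAnd => FAnd b a
  | AssOr => FOr a (FOr b c) | AssAnd => FAnd a (FAnd b c)
  | UnitOr => a | UnitAnd => a
  | TOrT => Ft | FAndF => Ff
  end.

(* rule instances (the instantiation is recorded, so that the tracing  *)
(* of atom occurrences through a step is determined)                   *)
Inductive inst (X : Type) :=
| IInt of X & X
| IWk of X
| ICon of X & X & X
| ICut of X & X
| ICowk of X
| ICocon of X & X & X
| ISw of fml X & fml X & fml X
| IMed of fml X & fml X & fml X & fml X
| IEq of eqax & bool & fml X & fml X & fml X.  (* true: lhs/rhs, false: rhs/lhs *)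

Definition ipre X (i : inst X) : fml X :=
  match i with
  | IInt _ _ => Ft | IWk _ => Ff | ICon x y _ => FOr (Atm x) (Atm y)
  | ICut x y => FAnd (Atm x) (Atm y) | ICowk x => Atm x | ICocon x _ _ => Atm x
  | ISw a b c => FAnd a (FOr b c)
  | IMed a b c d => FOr (FAnd a b) (FAnd c d)
  | IEq q d a b c => if d then eq_lhs q a b c else eq_rhs q a b c
  end.
Definition icon X (i : inst X) : fml X :=
  match i with
  | IInt x y => FOr (Atm x) (Atm y) | IWk x => Atm x | ICon _ _ z => Atm z
  | ICut _ _ => Ff | ICowk _ => Ft | ICocon _ y z => FAnd (Atm y) (Atm z)
  | ISw a b c => FOr (FAnd a b) c
  | IMed a b c d => FAnd (FOr a c) (FOr b d)
  | IEq q d a b c => if d then eq_rhs q a b c else eq_lhs q a b c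
  end.

Definition imap X Y (f : X -> Y) (i : inst X) : inst Y :=
  match i with
  | IInt x y => IInt (f x) (f y) | IWk x => IWk (f x) | ICon x y z => ICon (f x) (f y) (f z)
  | ICut x y => ICut (f x) (f y) | ICowk x => ICowk (f x)
  | ICocon x y z => ICocon (f x) (f y) (f z)
  | ISw a b c => ISw (fmap f a) (fmap f b) (fmap f c)
  | IMed a b c d => IMed (fmap f a) (fmap f b) (fmap f c) (fmap f d)
  | IEq q d a b c => IEq q d (fmap f a) (fmap f b) (fmap f c)
  end.

Definition inst_ok A (bar : A -> A) (i : inst A) : Prop :=
  match i with
  | IInt x y => y = bar x
  | ICut x y => y = bar x
  | ICon x y z => y = x /\ z = x
  | ICocon x y z => y = x /\ z = x
  | _ => True
  end.

Definition step X := (ctx X * inst X)%type.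
Definition smap X Y (f : X -> Y) (s : step X) : step Y := (cmap f s.1, imap f s.2).
Definition dstep X : step X := (Hole, ISw Ff Ff Ff).

Inductive deriv X : fml X -> seq (step X) -> fml X -> Prop :=
| deriv_nil a : deriv a [::] a
| deriv_cons c i s b :
    deriv (plug c (icon i)) s b -> deriv (plug c (ipre i)) ((c, i) :: s) b.

Definition sks_deriv A (bar : A -> A) (a : fml A) (s : seq (step A)) (b : fml A) :=
  deriv a s b /\ (forall i, i < size s -> inst_ok bar (nth (dstep A) s i).2).

Inductive vlab := VInt | VCut | VWk | VCowk | VCon | VCocon.

Definition n_upper (l : vlab) : nat :=
  match l with VInt => 0 | VCut => 2 | VWk => 0 | VCowk => 1 | VCon => 2 | VCocon => 1 end.
Definition n_lower (l : vlab) : nat :=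
  match l with VInt => 2 | VCut => 0 | VWk => 1 | VCowk => 0 | VCon => 1 | VCocon => 2 end.

(* up e = None means up(e) = top, lo e = None means lo(e) = bottom *)
Record flow := Flow {
  fV : finType; fE : finType;
  lab : fV -> vlab;
  up : fE -> option fV;
  lo : fE -> option fV }.

Definition fadj (B : flow) : rel (fV B) :=
  fun v w => [exists e, (up e == Some v) && (lo e == Some w)].

Definition is_atomic_flow (B : flow) : Prop :=
  [/\ (forall v : fV B, #|[pred e | lo e == Some v]| = n_upper (lab v)
                     /\ #|[pred e | up e == Some v]| = n_lower (lab v)),
      (forall v w : fV B, fadj v w -> ~~ connect (@fadj B) w v) &
      exists pi : fE B -> bool,
        (forall (v : fV B) (e e' : fE B), (lab v = VCon \/ lab v = VCocon) ->
            (up e = Some v \/ lo e = Some v) -> (up e' = Some v \/ lo e' = Some v) ->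
            pi e = pi e')
     /\ (forall (v : fV B) (e e' : fE B), lab v = VInt ->
            up e = Some v -> up e' = Some v -> e != e' -> pi e != pi e')
     /\ (forall (v : fV B) (e e' : fE B), lab v = VCut ->
            lo e = Some v -> lo e' = Some v -> e != e' -> pi e != pi e')].

Definition flow_iso (B C : flow) : Prop :=
  exists (f : fV B -> fV C) (g : fE B -> fE C),
    [/\ bijective f, bijective g,
        (forall v, lab (f v) = lab v),
        (forall e, up (g e) = omap f (up e)) &
        (forall e, lo (g e) = omap f (lo e))].

(* B is the flow of the derivation (a, s) iff its atom occurrences can  *)
(* be labelled by the edges of B so that labels are kept by contexts     *)
(* and by instantiated subformulae of switch/medial/=, and the vertices *)
(* of B are in bijection with the atomic steps, the labels of the redex *)
(* occurrences of the premiss (conclusion) of a step being exactly the  *)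
(* upper (lower) edges of the corresponding vertex, the labels of the    *)
(* premiss (conclusion) of the derivation being exactly the edges with  *)
(* up = top (lo = bottom).                                              *)
Definition ilab X (i : inst X) : option vlab :=
  match i with
  | IInt _ _ => Some VInt | IWk _ => Some VWk | ICon _ _ _ => Some VCon
  | ICut _ _ => Some VCut | ICowk _ => Some VCowk | ICocon _ _ _ => Some VCocon
  | _ => None
  end.

Definition labels A E (a : fml (A * E)) : seq E := map snd (fatoms a).

Definition exact_labels (E : eqType) (l : seq E) (P : E -> Prop) : Prop :=
  uniq l /\ (forall e, e \in l <-> P e).

Definition flow_of A (a : fml A) (s : seq (step A)) (B : flow) : Prop :=
  exists (a' : fml (A * fE B)) (s' : seq (step (A * fE B))) (b' : fml (A * fE B))
         (phi : fV B -> nat),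
  [/\ fmap fst a' = a, map (smap fst) s' = s & deriv a' s' b'] /\
  [/\ injective phi,
      (forall v, phi v < size s /\ ilab (nth (dstep A) s (phi v)).2 = Some (lab v)) &
      (forall i, i < size s -> ilab (nth (dstep A) s i).2 <> None ->
                 exists v, phi v = i)] /\
  [/\ exact_labels (labels a') (fun e => up e = None),
      exact_labels (labels b') (fun e => lo e = None) &
      forall v, let i' := (nth (dstep _) s' (phi v)).2 in
        exact_labels (labels (ipre i')) (fun e => lo e = Some v)
     /\ exact_labels (labels (icon i')) (fun e => up e = Some v)].

Section SE.

(* A = B minus iota, kappa, eps *)
Variables (B : flow) (iota kappa : fV B) (eps : fE B).

Definition del_flow : flow :=
  @Flow {v : fV B | (v != iota) && (v != kappa)} {e : fE B | e != eps}
    (fun v => lab (val v))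
    (fun e => obind (fun v => insub v) (up (val e)))
    (fun e => obind (fun v => insub v) (lo (val e))).

End SE.

Section Build.
Variables (A : flow) (e2 e3 : fE A).

Definition Uedge := {e : fE A | (up e == None) && (e != e2)}.
Definition Ledge := {e : fE A | (lo e == None) && (e != e3)}.

(* vertices: (tilde copy + hat copy) + ((weakening + coweakening) +
   (cocontractions indexed by U + contractions indexed by L)) *)
Definition VC : finType := ((fV A + fV A) + ((unit + unit) + (Uedge + Ledge)))%type.
(* edges: (tilde copy + hat copy without hat eps2, tilde eps3 being the
   merged edge) + (the eps_i + the eps'_j) *)
Definition EC : finType :=
  ((fE A + {e : fE A | e != e2}) + (Uedge + Ledge))%type.

Definition vt (v : fV A) : VC := inl (inl v).
Definition vh (v : fV A) : VC := inl (inr v).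
Definition vW : VC := inr (inl (inl tt)).
Definition vCW : VC := inr (inl (inr tt)).
Definition vCocon (u : Uedge) : VC := inr (inr (inl u)).
Definition vCon (l : Ledge) : VC := inr (inr (inr l)).

Definition labC (v : VC) : vlab :=
  match v with
  | inl (inl v) => lab v | inl (inr v) => lab v
  | inr (inl (inl _)) => VWk | inr (inl (inr _)) => VCowk
  | inr (inr (inl _)) => VCocon | inr (inr (inr _)) => VCon
  end.

Definition up_t (e : fE A) : option VC :=
  if e == e2 then Some vW
  else if up e is Some v then Some (vt v) else omap vCocon (insub e).
Definition up_h (e : fE A) : option VC :=
  if up e is Some v then Some (vh v) else omap vCocon (insub e).
Definition lo_h (e : fE A) : option VC :=
  if e == e3 then Some vCW
  else if lo e is Some v then Some (vh v) else omap vCon (insub e).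
Definition lo_t (e : fE A) : option VC :=
  if e == e3 then lo_h e2
  else if lo e is Some v then Some (vt v) else omap vCon (insub e).

Definition upC (e : EC) : option VC :=
  match e with
  | inl (inl e) => up_t e | inl (inr e) => up_h (val e)
  | inr (inl _) => None | inr (inr l) => Some (vCon l)
  end.
Definition loC (e : EC) : option VC :=
  match e with
  | inl (inl e) => lo_t e | inl (inr e) => lo_h (val e)
  | inr (inl u) => Some (vCocon u) | inr (inr _) => None
  end.

Definition se_build : flow := @Flow VC EC labC upC loC.

End Build.

Definition se_red (B C : flow) : Prop :=
  is_atomic_flow B /\
  exists (iota kappa : fV B) (eps : fE B)
         (e2 e3 : fE (del_flow iota kappa eps)),
    [/\ lab iota = VInt, lab kappa = VCut,
        up eps = Some iota & lo eps = Some kappa] /\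
    [/\ up (val e2) = Some iota, lo (val e3) = Some kappa &
        flow_iso (se_build e2 e3) C].

(* Main.v *)
Require Import Defs.
From mathcomp Require Import all_boot.
From Stdlib Require List.
From mathcomp Require Import zify.
Set Implicit Arguments. Unset Strict Implicit. Unset Printing Implicit Defensive.

Section Gen.
Variable X : Type.
Implicit Types (a b m x z : fml X) (s t : seq (step X)) (l : seq (inst X)) (c d : ctx X) (i : inst X).

Definition isatom (i : inst X) : bool := isSome (ilab i).

Definition AI (s : seq (step X)) : seq (inst X) :=
  map snd (filter (fun st => isatom st.2) s).

Lemma AI_cat s t : AI (s ++ t) = AI s ++ AI t.
Proof. by rewrite /AI filter_cat map_cat. Qed.

Fixpoint ccomp (d c : ctx X) : ctx X :=
  match d with
  | Hole => c
  | COrL d b => COrL (ccomp d c) b | COrR b d => COrR b (ccomp d c)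
  | CAndL d b => CAndL (ccomp d c) b | CAndR b d => CAndR b (ccomp d c)
  end.

Lemma plug_comp d c x : plug (ccomp d c) x = plug d (plug c x).
Proof. by elim: d => //= [d -> b|b d ->|d -> b|b d ->]. Qed.

Lemma deriv_cat a s b t (c : fml X) : deriv a s b -> deriv b t c -> deriv a (s ++ t) c.
Proof. by elim=> //= c0 i s0 b0 _ IH H; apply: deriv_cons; apply: IH. Qed.

Lemma deriv_plug d a s b : deriv a s b ->
  deriv (plug d a) (map (fun st => (ccomp d st.1, st.2)) s) (plug d b).
Proof.
elim=> [a0|c i s0 b0 _ IH]; first by constructor.
by rewrite /= -plug_comp; constructor; rewrite plug_comp.
Qed.

Lemma AI_plug d s : AI (map (fun st => (ccomp d st.1, st.2)) s) = AI s.
Proof. by elim: s => //= st s IH; rewrite /AI /=; case: (isatom st.2) => //=; congr cons. Qed.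

Lemma deriv_det a s b1 b2 : deriv a s b1 -> deriv a s b2 -> b1 = b2.
Proof.
move=> H; elim: H b2 => [a0|c i s0 b0 _ IH] b2 H2; first by inversion H2.
by inversion H2; subst; apply: IH.
Qed.

Lemma deriv_consI c i s a b : deriv a ((c, i) :: s) b ->
  a = plug c (ipre i) /\ deriv (plug c (icon i)) s b.
Proof. by move=> H; inversion H; subst. Qed.

Lemma deriv_split a s t b : deriv a (s ++ t) b -> exists m, deriv a s m /\ deriv m t b.
Proof.
elim: s a => [|[c i] s IH] a /= H; first by exists a; split=> //; constructor.
case/deriv_consI: H => -> H. have [m [H1 H2]] := IH _ H. by exists m; split=> //; constructor.
Qed.



Definition R (a b : fml X) (l : seq (inst X)) := exists s, deriv a s b /\ AI s = l.

Lemma R_refl a : R a a [::].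
Proof. by exists [::]; split=> //; constructor. Qed.

Lemma R_trans a b (c : fml X) l1 l2 : R a b l1 -> R b c l2 -> R a c (l1 ++ l2).
Proof.
move=> [s [H1 E1]] [t [H2 E2]]; exists (s ++ t); split; first exact: deriv_cat H1 H2.
by rewrite AI_cat E1 E2.
Qed.

Lemma R_plug d a b l : R a b l -> R (plug d a) (plug d b) l.
Proof. move=> [s [H E]]; eexists; split; first exact: deriv_plug H. by rewrite AI_plug. Qed.

Lemma R_step i : R (ipre i) (icon i) (if isatom i then [:: i] else [::]).
Proof.
exists [:: (Hole, i)]; split; first by apply: (@deriv_cons X Hole i); constructor.
by rewrite /AI /=; case: (isatom i).
Qed.

Lemma R_na i : isatom i = false -> R (ipre i) (icon i) [::].
Proof. by move=> H; have := R_step i; rewrite H. Qed.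

Lemma R_at i : isatom i -> R (ipre i) (icon i) [:: i].
Proof. by move=> H; have := R_step i; rewrite H. Qed.

Lemma R_orL a a' b l : R a a' l -> R (FOr a b) (FOr a' b) l.
Proof. exact: (R_plug (COrL Hole b)). Qed.
Lemma R_orR a a' b l : R a a' l -> R (FOr b a) (FOr b a') l.
Proof. exact: (R_plug (COrR b Hole)). Qed.
Lemma R_andL a a' b l : R a a' l -> R (FAnd a b) (FAnd a' b) l.
Proof. exact: (R_plug (CAndL Hole b)). Qed.
Lemma R_andR a a' b l : R a a' l -> R (FAnd b a) (FAnd b a') l.
Proof. exact: (R_plug (CAndR b Hole)). Qed.

Lemma R_comor a b : R (FOr a b) (FOr b a) [::].
Proof. exact (@R_na (IEq ComOr true a b Ff) erefl). Qed.
Lemma R_comand a b : R (FAnd a b) (FAnd b a) [::].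
Proof. exact (@R_na (IEq ComAnd true a b Ff) erefl). Qed.
Lemma R_assor a b (c : fml X) : R (FOr (FOr a b) c) (FOr a (FOr b c)) [::].
Proof. exact (@R_na (IEq AssOr true a b c) erefl). Qed.
Lemma R_assorV a b (c : fml X) : R (FOr a (FOr b c)) (FOr (FOr a b) c) [::].
Proof. exact (@R_na (IEq AssOr false a b c) erefl). Qed.
Lemma R_assand a b (c : fml X) : R (FAnd (FAnd a b) c) (FAnd a (FAnd b c)) [::].
Proof. exact (@R_na (IEq AssAnd true a b c) erefl). Qed.
Lemma R_assandV a b (c : fml X) : R (FAnd a (FAnd b c)) (FAnd (FAnd a b) c) [::].
Proof. exact (@R_na (IEq AssAnd false a b c) erefl). Qed.
Lemma R_unitor a : R (FOr a Ff) a [::].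
Proof. exact (@R_na (IEq UnitOr true a Ff Ff) erefl). Qed.
Lemma R_unitorV a : R a (FOr a Ff) [::].
Proof. exact (@R_na (IEq UnitOr false a Ff Ff) erefl). Qed.
Lemma R_unitand a : R (FAnd a Ft) a [::].
Proof. exact (@R_na (IEq UnitAnd true a Ff Ff) erefl). Qed.
Lemma R_unitandV a : R a (FAnd a Ft) [::].
Proof. exact (@R_na (IEq UnitAnd false a Ff Ff) erefl). Qed.
Lemma R_tort : R (FOr Ft Ft) Ft [::].
Proof. exact (@R_na (IEq TOrT true Ff Ff Ff) erefl). Qed.
Lemma R_fandfV : R Ff (FAnd Ff Ff) [::].
Proof. exact (@R_na (IEq FAndF false Ff Ff Ff) erefl). Qed.
Lemma R_sw a b (c : fml X) : R (FAnd a (FOr b c)) (FOr (FAnd a b) c) [::].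
Proof. exact (@R_na (ISw a b c) erefl). Qed.
Lemma R_med a b (c d : fml X) : R (FOr (FAnd a b) (FAnd c d)) (FAnd (FOr a c) (FOr b d)) [::].
Proof. exact (@R_na (IMed a b c d) erefl). Qed.
Lemma R_cocon (x y z : X) : R (Atm x) (FAnd (Atm y) (Atm z)) [:: ICocon x y z].
Proof. exact (@R_at (ICocon x y z) erefl). Qed.
Lemma R_con (x y z : X) : R (FOr (Atm x) (Atm y)) (Atm z) [:: ICon x y z].
Proof. exact (@R_at (ICon x y z) erefl). Qed.
Lemma R_wk (x : X) : R Ff (Atm x) [:: IWk x].
Proof. exact (@R_at (IWk x) erefl). Qed.
Lemma R_cowk (x : X) : R (Atm x) Ft [:: ICowk x].
Proof. exact (@R_at (ICowk x) erefl). Qed.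

Lemma R_tr3 a b (c d : fml X) l1 l2 l3 : R a b l1 -> R b c l2 -> R c d l3 -> R a d (l1 ++ l2 ++ l3).
Proof. by move=> H1 H2 H3; apply: R_trans H1 (R_trans H2 H3). Qed.

Lemma R_eql a b l l' : l = l' -> R a b l -> R a b l'.
Proof. by move=> ->. Qed.

Lemma R_pullout c z : R (plug c z) (FOr (plug c Ff) z) [::].
Proof.
elim: c => /=.
- apply: (R_eql (l := [::] ++ [::])) => //; apply: R_trans (R_unitorV _) (R_comor _ _).
- move=> c IH b; apply: (R_eql (l := [::] ++ [::] ++ [::] ++ [::])) => //.
  apply: R_tr3 (R_orL _ IH) (R_assor _ _ _) _.
  apply: R_trans (R_orR _ (R_comor _ _)) (R_assorV _ _ _).
- move=> b c IH; apply: (R_eql (l := [::] ++ [::])) => //.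
  apply: R_trans (R_orR _ IH) (R_assorV _ _ _).
- move=> c IH b; apply: (R_eql (l := [::] ++ [::] ++ [::] ++ [::])) => //.
  apply: R_tr3 (R_andL _ IH) (R_comand _ _) _.
  apply: R_trans (R_sw _ _ _) (R_orL _ (R_comand _ _)).
- move=> b c IH; apply: (R_eql (l := [::] ++ [::])) => //.
  apply: R_trans (R_andR _ IH) (R_sw _ _ _).
Qed.

Lemma R_pushin c z x : R (FAnd z (plug c x)) (plug c (FAnd z x)) [::].
Proof.
elim: c => /=.
- exact: R_refl.
- move=> c IH b; apply: (R_eql (l := [::] ++ [::])) => //.
  apply: R_trans (R_sw _ _ _) (R_orL _ IH).
- move=> b c IH; apply: (R_eql (l := [::] ++ [::] ++ [::] ++ [::])) => //.
  apply: R_tr3 (R_andR _ (R_comor _ _)) (R_sw _ _ _) _.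
  apply: R_trans (R_orL _ IH) (R_comor _ _).
- move=> c IH b; apply: (R_eql (l := [::] ++ [::])) => //.
  apply: R_trans (R_assandV _ _ _) (R_andL _ IH).
- move=> b c IH; apply: (R_eql (l := [::] ++ [::] ++ [::] ++ [::])) => //.
  apply: R_tr3 (R_assandV _ _ _) (R_andL _ (R_comand _ _)) _.
  apply: R_trans (R_assand _ _ _) (R_andR _ IH).
Qed.

End Gen.

Section Gen2.
Variables (X Y : Type) (f g h : X -> Y).

Lemma R_cocontr (a : fml X) :
  R (fmap f a) (FAnd (fmap g a) (fmap h a)) (map (fun p => ICocon (f p) (g p) (h p)) (fatoms a)).
Proof.
elim: a => /=.
- exact: R_fandfV.
- exact: R_unitandV.
- move=> p; exact: R_cocon.
- move=> a IHa b IHb; apply: (R_eql _ (R_tr3 (R_orL _ IHa) (R_orR _ IHb) (R_med _ _ _ _))).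
  by rewrite map_cat cats0.
- move=> a IHa b IHb.
  have H3 : R (FAnd (FAnd (fmap g a) (fmap h a)) (FAnd (fmap g b) (fmap h b)))
              (FAnd (FAnd (fmap g a) (fmap g b)) (FAnd (fmap h a) (fmap h b))) [::].
    apply: (R_eql (l := [::] ++ ([::] ++ [::] ++ [::]) ++ [::])) => //.
    apply: R_tr3 (R_assand _ _ _) (R_andR _ (R_tr3 (R_assandV _ _ _) (R_andL _ (R_comand _ _)) (R_assand _ _ _))) (R_assandV _ _ _).
  apply: (R_eql _ (R_tr3 (R_andL _ IHa) (R_andR _ IHb) H3)).
  by rewrite map_cat cats0.
Qed.

Lemma R_contr (a : fml X) :
  R (FOr (fmap g a) (fmap h a)) (fmap f a) (map (fun p => ICon (g p) (h p) (f p)) (fatoms a)).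
Proof.
elim: a => /=.
- exact: R_unitor.
- exact: R_tort.
- move=> p; exact: R_con.
- move=> a IHa b IHb.
  have H3 : R (FOr (FOr (fmap g a) (fmap g b)) (FOr (fmap h a) (fmap h b)))
              (FOr (FOr (fmap g a) (fmap h a)) (FOr (fmap g b) (fmap h b))) [::].
    apply: (R_eql (l := [::] ++ ([::] ++ [::] ++ [::]) ++ [::])) => //.
    apply: R_tr3 (R_assor _ _ _) (R_orR _ (R_tr3 (R_assorV _ _ _) (R_orL _ (R_comor _ _)) (R_assor _ _ _))) (R_assorV _ _ _).
  apply: (R_eql _ (R_tr3 H3 (R_orL _ IHa) (R_orR _ IHb))).
  by rewrite map_cat.
- move=> a IHa b IHb; apply: (R_eql _ (R_tr3 (R_med _ _ _ _) (R_andL _ IHa) (R_andR _ IHb))).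
  by rewrite map_cat.
Qed.

End Gen2.

Section Bind.
Variables (X Y : Type) (sg : X -> fml Y) (r : X -> Y).

Fixpoint fbind (a : fml X) : fml Y :=
  match a with
  | Ff => Ff | Ft => Ft | Atm x => sg x
  | FOr a b => FOr (fbind a) (fbind b) | FAnd a b => FAnd (fbind a) (fbind b)
  end.

Fixpoint cbind (c : ctx X) : ctx Y :=
  match c with
  | Hole => Hole
  | COrL c b => COrL (cbind c) (fbind b) | COrR b c => COrR (fbind b) (cbind c)
  | CAndL c b => CAndL (cbind c) (fbind b) | CAndR b c => CAndR (fbind b) (cbind c)
  end.

Lemma plug_bind c x : fbind (plug c x) = plug (cbind c) (fbind x).
Proof. by elim: c => //= [c -> b|b c ->|c -> b|b c ->]. Qed.

Definition ibind (i : inst X) : inst Y :=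
  match i with
  | ISw a b c => ISw (fbind a) (fbind b) (fbind c)
  | IMed a b c d => IMed (fbind a) (fbind b) (fbind c) (fbind d)
  | IEq q d a b c => IEq q d (fbind a) (fbind b) (fbind c)
  | _ => imap r i
  end.

Lemma fbind_fmap x : (forall p, List.In p (fatoms x) -> sg p = Atm (r p)) -> fbind x = fmap r x.
Proof.
elim: x => //= [p H|a IHa b IHb H|a IHa b IHb H]; first by apply: H; left.
- by rewrite IHa ?IHb // => p Hp; apply: H; apply List.in_or_app; tauto.
- by rewrite IHa ?IHb // => p Hp; apply: H; apply List.in_or_app; tauto.
Qed.

Lemma ibind_prop i :
  (isatom i -> forall p, List.In p (fatoms (ipre i) ++ fatoms (icon i)) -> sg p = Atm (r p)) ->
  fbind (ipre i) = ipre (ibind i) /\ fbind (icon i) = icon (ibind i).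
Proof.
case: i => /=.
- by move=> x y H; rewrite !H //=; tauto.
- by move=> x H; rewrite !H //=; tauto.
- by move=> x y z H; rewrite !H //=; tauto.
- by move=> x y H; rewrite !H //=; tauto.
- by move=> x H; rewrite !H //=; tauto.
- by move=> x y z H; rewrite !H //=; tauto.
- by [].
- by [].
- by move=> q [] a b c _; case: q.
Qed.

Lemma R_bind a s b : deriv a s b ->
  (forall i, List.In i (AI s) -> forall p, List.In p (fatoms (ipre i) ++ fatoms (icon i)) -> sg p = Atm (r p)) ->
  R (fbind a) (fbind b) (map ibind (AI s)).
Proof.
elim=> [a0 _|c i s0 b0 _ IH H]; first exact: R_refl.
rewrite !plug_bind.
have Es : AI ((c, i) :: s0) = if isatom i then i :: AI s0 else AI s0.
  by rewrite /AI /=; case: (isatom i).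
rewrite Es in H *.
have [E1 E2] : fbind (ipre i) = ipre (ibind i) /\ fbind (icon i) = icon (ibind i).
  by apply: ibind_prop => Hi; apply: H; rewrite Hi; left.
rewrite E1.
have IH' := IH (fun j Hj => H j (ltac:(case: (isatom i); [right|]; exact Hj))).
case Hi: (isatom i) => /=.
- apply: (R_trans (l1 := [:: ibind i]) (b := plug (cbind c) (icon (ibind i)))).
    apply: R_plug; apply: R_at.
    by move: Hi; case: (i).
  by rewrite -E2 -plug_bind.
- apply: (R_trans (l1 := [::]) (b := plug (cbind c) (icon (ibind i)))).
    apply: R_plug; apply: R_na.
    by move: Hi; case: (i).
  by rewrite -E2 -plug_bind.
Qed.

End Bind.


Lemma In_nth T (x0 x : T) s : List.In x s -> exists2 k, k < size s & nth x0 s k = x.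
Proof.
elim: s => //= y s IH [->|H]; first by exists 0.
by have [k Hk E] := IH H; exists k.+1.
Qed.

Lemma nth_In T (x0 : T) s k : k < size s -> List.In (nth x0 s k) s.
Proof. by elim: s k => //= y s IH [|k] /= Hk; [left|right; apply: IH]. Qed.



Lemma find_count1 T (P : pred T) x0 s i :
  i < size s -> P (nth x0 s i) -> count P s = 1 -> find P s = i.
Proof.
elim: s i => //= y s IH [|i] /= Hi HP.
- by rewrite HP.
- case Py: (P y) => /=.
  + rewrite add1n => -[] H0.
    have : has P s by apply/(has_nthP x0); exists i.
    by rewrite has_count H0.
  + by rewrite add0n => H; rewrite (IH i).
Qed.

Lemma count1_nth T (P : pred T) x0 s j :
  j < size s -> (forall k, k < size s -> P (nth x0 s k) = (k == j)) -> count P s = 1.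
Proof.
elim: s j => //= y s IH [|j] /= Hj H.
- rewrite (H 0 erefl) /= add1n; congr S.
  apply/eqP; rewrite -leqn0 leqNgt -has_count; apply/(has_nthP x0) => -[k Hk Pk].
  by have := H k.+1 Hk; rewrite Pk.
- rewrite (H 0 erefl) /= (IH j) // => k Hk; rewrite (H k.+1) //.
Qed.

Lemma count_In0 T (P : pred T) s x : count P s = 0 -> List.In x s -> ~~ P x.
Proof.
elim: s => //= y s IH; case Py: (P y) => //= H [<-|Hx]; first by rewrite Py.
exact: IH.
Qed.

Lemma count_eqIn T (P Q : pred T) s :
  (forall x, List.In x s -> P x = Q x) -> count P s = count Q s.
Proof. by elim: s => //= y s IH H; rewrite H ?IH //; [move=> x Hx; apply: H; right | left]. Qed.

Lemma map_eqIn T U (f g : T -> U) s :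
  (forall x, List.In x s -> f x = g x) -> map f s = map g s.
Proof. by elim: s => //= y s IH H; rewrite H ?IH //; [move=> x Hx; apply: H; right | left]. Qed.

Lemma In_map_iff T U (f : T -> U) s y : List.In y (map f s) <-> exists x, f x = y /\ List.In x s.
Proof. exact: List.in_map_iff. Qed.

Section FM.
Variables (X Y : Type) (f : X -> Y).
Lemma fatoms_fmap a : fatoms (fmap f a) = map f (fatoms a).
Proof. by elim: a => //= a -> b ->; rewrite map_cat. Qed.
Lemma fmap_plug c x : fmap f (plug c x) = plug (cmap f c) (fmap f x).
Proof. by elim: c => //= [c -> b|b c ->|c -> b|b c ->]. Qed.
Lemma fmap_ipre i : fmap f (ipre i) = ipre (imap f i).
Proof. by case: i => //= q [] a b c; case: q. Qed.
Lemma fmap_icon i : fmap f (icon i) = icon (imap f i).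
Proof. by case: i => //= q [] a b c; case: q. Qed.
Lemma deriv_map a s b : deriv a s b -> deriv (fmap f a) (map (smap f) s) (fmap f b).
Proof.
elim=> [a0|c i s0 b0 _ IH] /=; first by constructor.
rewrite fmap_plug fmap_ipre; constructor; by rewrite -fmap_icon -fmap_plug.
Qed.
Lemma ilab_imap i : ilab (imap f i) = ilab i.
Proof. by case: i. Qed.
Lemma isatom_imap i : isatom (imap f i) = isatom i.
Proof. by rewrite /isatom ilab_imap. Qed.
Lemma AI_map s : AI (map (smap f) s) = map (imap f) (AI s).
Proof. by elim: s => //= st s IH; rewrite /AI /= isatom_imap; case: (isatom st.2) => //=; congr cons. Qed.
End FM.

Lemma fmap_comp X Y Z (f : Y -> Z) (g : X -> Y) a : fmap f (fmap g a) = fmap (f \o g) a.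
Proof. by elim: a => //= a -> b ->. Qed.
Lemma cmap_comp X Y Z (f : Y -> Z) (g : X -> Y) c : cmap f (cmap g c) = cmap (f \o g) c.
Proof. by elim: c => //= [c -> b|b c ->|c -> b|b c ->]; rewrite fmap_comp. Qed.
Lemma imap_comp X Y Z (f : Y -> Z) (g : X -> Y) i : imap f (imap g i) = imap (f \o g) i.
Proof. by case: i => //= *; rewrite !fmap_comp. Qed.

Definition lab_in X E (x : X * E) : E := x.2.

Lemma In_labels A (E : eqType) (p : A * E) a : List.In p (fatoms a) -> p.2 \in labels a.
Proof.
rewrite /labels; elim: (fatoms a) => //= y l IH [->|H]; first by rewrite inE eqxx.
by rewrite inE IH ?orbT.
Qed.

Section Good.
Variables (A : Type) (F : flow).
Notation E := (fE F).
Notation XX := (A * E)%type.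
Implicit Types (s : seq (step XX)) (i : inst XX) (st : step XX).

Definition owner (i : inst XX) : option (fV F) :=
  if isatom i then
    match labels (icon i) with
    | e :: _ => up e
    | [::] => match labels (ipre i) with e :: _ => lo e | [::] => None end
    end
  else None.

Definition vok (i : inst XX) (v : fV F) :=
  [/\ ilab i = Some (lab v),
      exact_labels (labels (ipre i)) (fun e => lo e = Some v) &
      exact_labels (labels (icon i)) (fun e => up e = Some v)].

Lemma vok_owner i v : vok i v -> owner i = Some v.
Proof.
case=> Hl [_ Hp] [_ Hc]; case: i Hl Hp Hc => //= [x y|x|x y z|x y|x|x y z] _ Hp Hc;
  rewrite /owner /= ?(Hc x.2 ) ?(Hc z.2) ?(Hp x.2) ?inE ?eqxx //.
- by apply/Hc; rewrite inE eqxx.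
- by apply/Hc; rewrite inE eqxx.
- by apply/Hc; rewrite inE eqxx.
- by apply/Hp; rewrite inE eqxx.
- by apply/Hp; rewrite inE eqxx.
- by apply/Hc; rewrite inE eqxx.
Qed.

Lemma owner_na i : isatom i = false -> owner i = None.
Proof. by rewrite /owner => ->. Qed.

Lemma count_AI (P : pred (option (fV F))) s : P None = false ->
  count (fun st => P (owner st.2)) s = count (fun i => P (owner i)) (AI s).
Proof.
move=> HN; elim: s => //= st s IH; rewrite /AI /=.
case Ha: (isatom st.2) => /=; first by rewrite IH.
by rewrite owner_na // HN IH.
Qed.

Lemma In_filter T (p : pred T) x l : List.In x (filter p l) -> List.In x l /\ p x.
Proof.
elim: l => //= y l IH; case Hy: (p y) => /=.
- case=> [<-|H]; first by split => //; left.
  by have [? ?] := IH H; split => //; right.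
- by move=> H; have [? ?] := IH H; split => //; right.
Qed.

Lemma In_AI s i : List.In i (AI s) -> exists st, [/\ List.In st s, st.2 = i & isatom i].
Proof.
rewrite /AI; elim: s => //= y l IH; case Hy: (isatom y.2) => /=.
- case=> [<-|H]; first by exists y; split => //; left.
  by have [st [? ? ?]] := IH H; exists st; split => //; right.
- by move=> H; have [st [? ? ?]] := IH H; exists st; split => //; right.
Qed.

Lemma AI_In s st : List.In st s -> isatom st.2 -> List.In st.2 (AI s).
Proof.
rewrite /AI => H Ha; apply/In_map_iff; exists st; split => //.
elim: s H => //= y l IH [->|H]; first by rewrite Ha; left.
by case: (isatom y.2) => //=; [right|]; apply: IH.
Qed.

Definition good (a' : fml XX) (s' : seq (step XX)) (b' : fml XX) :=
  [/\ deriv a' s' b',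
      exact_labels (labels a') (fun e => up e = None),
      exact_labels (labels b') (fun e => lo e = None),
      (forall i, List.In i (AI s') -> exists v, vok i v) &
      (forall v, count (fun i => owner i == Some v) (AI s') = 1)].

Lemma dstep_map : dstep A = smap fst (dstep XX).
Proof. by []. Qed.

Lemma good_flow a' s' b' : good a' s' b' -> flow_of (fmap fst a') (map (smap fst) s') F.
Proof.
case=> Hd Ha Hb Hv Hc.
pose P v := (fun st : step XX => owner st.2 == Some v).
have HcP v : count (P v) s' = 1 by rewrite /P (count_AI (P := fun o => o == Some v)) ?Hc.
have Hhas v : has (P v) s' by rewrite has_count HcP.
have HvP k v : k < size s' -> P v (nth (dstep _) s' k) -> vok (nth (dstep _) s' k).2 v.
  move=> Hk /eqP Ho.
  have Hat : isatom (nth (dstep _) s' k).2 by move: Ho; rewrite /owner; case: isatom.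
  have [w Hw] := Hv _ (AI_In (nth_In _ Hk) Hat).
  by move: (vok_owner Hw); rewrite Ho => -[->].
have Hlt v : find (P v) s' < size s' by rewrite -has_find.
exists a', s', b', (fun v => find (P v) s'); split; first by split.
split; [split|split].
- move=> v w E; have Hv1 := nth_find (dstep _) (Hhas v); have Hw1 := nth_find (dstep _) (Hhas w).
  by move: Hv1; rewrite E => /eqP; move: Hw1 => /eqP ->; case.
- move=> v; rewrite size_map; split => //.
  rewrite dstep_map (nth_map (dstep _)) //= ilab_imap.
  by case: (HvP _ v (Hlt v) (nth_find _ (Hhas v))).
- move=> i; rewrite size_map => Hi; rewrite dstep_map (nth_map (dstep _)) //= ilab_imap => Hl.
  have Hat : isatom (nth (dstep _) s' i).2 by rewrite /isatom; case: ilab Hl.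
  have [w Hw] := Hv _ (AI_In (nth_In _ Hi) Hat).
  exists w; apply: (find_count1 (x0 := dstep _)) => //; by rewrite /P /= (vok_owner Hw).
- done.
- done.
- move=> v /=.
  by case: (HvP _ v (Hlt v) (nth_find _ (Hhas v))).
Qed.

Lemma flow_good (a : fml A) (s : seq (step A)) : flow_of a s F ->
  exists a' s' b', [/\ fmap fst a' = a, map (smap fst) s' = s & good a' s' b'].
Proof.
move=> [a' [s' [b' [phi [[Ha Hs Hd] [[Hinj Hphi Hcov] [Hpre Hcon Hvx]]]]]]].
exists a', s', b'; split => //.
have Hsz : size s = size s' by rewrite -Hs size_map.
have Hnth k : k < size s' -> (nth (dstep A) s k).2 = imap fst (nth (dstep _) s' k).2.
  by move=> Hk; rewrite -Hs dstep_map (nth_map (dstep _)).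
have Hvv v : vok (nth (dstep _) s' (phi v)).2 v.
  have [H1 H2] := Hphi v; have [H3 H4] := Hvx v; split => //.
  by rewrite -(ilab_imap fst) -Hnth -?Hsz.
have Hat k : k < size s' -> isatom (nth (dstep _) s' k).2 ->
    exists v, phi v = k /\ vok (nth (dstep _) s' k).2 v.
  move=> Hk Ha'; have [v Hv] := Hcov k (ltac:(by rewrite Hsz)) (ltac:(rewrite Hnth // ilab_imap; by move: Ha'; rewrite /isatom; case: ilab)).
  by exists v; split => //; rewrite -Hv.
split => //.
- move=> i /In_AI [st [Hst <- Hi]].
  have [k Hk Ek] := In_nth (dstep _) Hst.
  have [v [_ Hv]] := Hat k Hk (ltac:(by rewrite Ek)).
  by exists v; rewrite -Ek.
- move=> v; rewrite -(count_AI (P := fun o => o == Some v)) //.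
  have Hp : phi v < size s' by rewrite -Hsz; case: (Hphi v).
  apply: (count1_nth (x0 := dstep _) Hp) => k Hk.
  apply/idP/idP.
  + move=> /eqP Ho.
    have Ha' : isatom (nth (dstep _) s' k).2 by move: Ho; rewrite /owner; case: isatom.
    have [w [Hw1 Hw2]] := Hat k Hk Ha'.
    by move: (vok_owner Hw2); rewrite Ho => -[->]; rewrite Hw1.
  + by move=> /eqP ->; rewrite (vok_owner (Hvv v)).
Qed.

End Good.

Lemma exact_map (E1 E2 : eqType) (g : E1 -> E2) l (P : E1 -> Prop) (Q : E2 -> Prop) :
  bijective g -> exact_labels l P -> (forall e, Q (g e) <-> P e) -> exact_labels (map g l) Q.
Proof.
move=> [gi gK giK] [Hu Hm] HQ; split; first by rewrite map_inj_uniq //; apply: can_inj gK.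
move=> e'; rewrite -[e']giK mem_map; last exact: can_inj gK.
by rewrite HQ Hm.
Qed.

Lemma good_iso A (F G : flow) (a' : fml (A * fE F)) s' b' : flow_iso F G -> good a' s' b' ->
  exists a'' s'' b'', [/\ fmap fst a'' = fmap fst a', map (smap fst) s'' = map (smap fst) s'
                     & good (F := G) a'' s'' b''].
Proof.
move=> [f [g [Hf Hg Hlab Hup Hlo]]] [Hd Ha Hb Hv Hc].
pose g' := fun p : A * fE F => (p.1, g p.2).
have Hlabs x : labels (fmap g' x) = map g (labels x).
  by rewrite /labels fatoms_fmap -!map_comp.
have finj := bij_inj Hf.
have Hupn e : up (g e) = None <-> up e = None by rewrite Hup; case: (up e).
have Hlon e : lo (g e) = None <-> lo e = None by rewrite Hlo; case: (lo e).
have Hups e v : up (g e) = Some (f v) <-> up e = Some v.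
  by rewrite Hup; case: (up e) => [w|] //=; split => [[/finj ->]|[->]].
have Hlos e v : lo (g e) = Some (f v) <-> lo e = Some v.
  by rewrite Hlo; case: (lo e) => [w|] //=; split => [[/finj ->]|[->]].
have Hvok i v : vok i v -> vok (F := G) (imap g' i) (f v).
  case=> H1 H2 H3; split.
  - by rewrite ilab_imap H1 Hlab.
  - by rewrite -fmap_ipre Hlabs; apply: (exact_map (g := g) Hg H2) => e; rewrite Hlos.
  - by rewrite -fmap_icon Hlabs; apply: (exact_map (g := g) Hg H3) => e; rewrite Hups.
have Hown i : owner (F := G) (imap g' i) = omap f (owner i).
  rewrite /owner isatom_imap; case: (isatom i) => //.
  rewrite -fmap_icon -fmap_ipre !Hlabs.
  case: (labels (icon i)) => [|e l] /=; last by rewrite Hup.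
  by case: (labels (ipre i)) => [|e l] /=; last by rewrite Hlo.
exists (fmap g' a'), (map (smap g') s'), (fmap g' b'); split.
- by rewrite fmap_comp.
- by rewrite -map_comp; apply: eq_map => -[c i]; rewrite /smap /= cmap_comp imap_comp.
- split.
  + exact: deriv_map.
  + by rewrite Hlabs; apply: (exact_map (g := g) Hg Ha) => e; rewrite Hupn.
  + by rewrite Hlabs; apply: (exact_map (g := g) Hg Hb) => e; rewrite Hlon.
  + rewrite AI_map => i /In_map_iff [j [<- Hj]].
    by have [v Hv'] := Hv _ Hj; exists (f v); apply: Hvok.
  + move=> w; have [fi fK fiK] := Hf.
    rewrite AI_map count_map -(Hc (fi w)); apply: eq_count => i /=.
    rewrite Hown; case: (owner i) => [v|] //=.
    apply/eqP/eqP => [[<-]|[->]]; by rewrite ?fK ?fiK.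
Qed.

Lemma flow_iso_of A (a : fml A) s (F G : flow) : flow_iso F G -> flow_of a s F -> flow_of a s G.
Proof.
move=> Hi /flow_good [a' [s' [b' [<- <- Hg]]]].
have [a'' [s'' [b'' [<- <- Hg']]]] := good_iso Hi Hg.
exact: (good_flow Hg').
Qed.


Lemma exact_img (E1 E2 : eqType) (g : E1 -> E2) l (P : E1 -> Prop) (Q : E2 -> Prop) :
  exact_labels l P -> (forall e e', P e -> P e' -> g e = g e' -> e = e') ->
  (forall e', Q e' <-> exists e, P e /\ g e = e') -> exact_labels (map g l) Q.
Proof.
move=> [Hu Hm] Hinj HQ; split.
- rewrite map_inj_in_uniq // => x y /Hm Hx /Hm Hy; exact: Hinj.
- move=> e'; rewrite HQ; split.
  + by case/mapP => e /Hm He ->; exists e.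
  + by case=> e [/Hm He <-]; apply: map_f.
Qed.

Section Main.
Variables (At : Type) (bar : At -> At) (bar_inv : involutive bar).
Variables (B : flow) (iota kappa : fV B) (eps : fE B).
Hypotheses (Hlab_i : lab iota = VInt) (Hlab_k : lab kappa = VCut)
  (Hup_eps : up eps = Some iota) (Hlo_eps : lo eps = Some kappa) (Hik : iota != kappa).
Local Notation D := (del_flow iota kappa eps).
Variables (e2 e3 : fE D).
Hypotheses (Hup2 : up (val e2) = Some iota) (Hlo3 : lo (val e3) = Some kappa)
  (Hupi : forall e, up e = Some iota -> e = eps \/ e = val e2)
  (Hlok : forall e, lo e = Some kappa -> e = eps \/ e = val e3)
  (Hnouk : forall e, up e <> Some kappa) (Hnoli : forall e, lo e <> Some iota).
Local Notation C := (se_build e2 e3).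

Lemma e2_neq_eps : val e2 != eps. Proof. exact: valP e2. Qed.
Lemma e3_neq_eps : val e3 != eps. Proof. exact: valP e3. Qed.

Lemma vD_some (u : fV B) (v' : fV D) : (insub u = Some v') <-> u = val v'.
Proof.
split; first by case: insubP => // w _ <- [->].
by move=> ->; rewrite valK.
Qed.

Lemma loD_some (d : fE D) v' : lo d = Some v' <-> lo (val d) = Some (val v').
Proof. by rewrite [lo d]/=; case: (lo (val d)) => [u|] //=; rewrite vD_some; split => [->|[]]. Qed.

Lemma upD_some (d : fE D) v' : up d = Some v' <-> up (val d) = Some (val v').
Proof. by rewrite [up d]/=; case: (up (val d)) => [u|] //=; rewrite vD_some; split => [->|[]]. Qed.

Lemma vD_none (u : fV B) : (insub u : option (fV D)) = None <-> (u = iota \/ u = kappa).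
Proof.
case: insubP => [w Hw <-|]; last first.
  by rewrite negb_and !negbK => /orP [] /eqP ->; split => //; tauto.
split => //; move: (valP w) => /andP [/eqP H1 /eqP H2] [] //.
Qed.

Lemma loDN (d : fE D) : lo d = None <-> (lo (val d) = None \/ d = e3).
Proof.
rewrite [lo d]/=; case E: (lo (val d)) => [u|] /=; last by split => //; left.
rewrite vD_none; split.
- case=> Hu; first by subst; case: (Hnoli E).
  subst; case: (Hlok E) => H; first by move: (valP d); rewrite H eqxx.
  by right; apply: val_inj.
- case=> [H|Hd]; first by exfalso; move: H E; case: (lo _) => //; congruence.
  by right; move: E; rewrite Hd Hlo3; case.
Qed.

Lemma upDN (d : fE D) : up d = None <-> (up (val d) = None \/ d = e2).
Proof.
rewrite [up d]/=; case E: (up (val d)) => [u|] /=; last by split => //; left.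
rewrite vD_none; split.
- case=> Hu; last by subst; case: (Hnouk E).
  subst; case: (Hupi E) => H; first by move: (valP d); rewrite H eqxx.
  by right; apply: val_inj.
- case=> [H|Hd]; first by exfalso; move: H E; case: (up _) => //; congruence.
  by left; move: E; rewrite Hd Hup2; case.
Qed.

Definition toD (e : fE B) : fE D := insubd e2 e.
Lemma toDK (e : fE B) : e != eps -> val (toD e) = e.
Proof. by move=> H; rewrite /toD insubdK. Qed.
Lemma valD (d : fE D) : toD (val d) = d.
Proof. by rewrite /toD valKd. Qed.
Lemma toD_inj (e e' : fE B) : e != eps -> e' != eps -> toD e = toD e' -> e = e'.
Proof. by move=> H H' E; rewrite -(toDK H) -(toDK H') E. Qed.

Definition rt (e : fE B) : fE C := inl (inl (toD e)).
Definition rh (e : fE B) : fE C :=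
  match (insub (toD e) : option {d : fE D | d != e2}) with
  | Some d => inl (inr d) | None => inl (inl e3) end.
Definition fU (e : fE B) : fE C :=
  match (insub (toD e) : option (Uedge e2)) with Some u => inr (inl u) | None => rt e end.
Definition fL (e : fE B) : fE C :=
  match (insub (toD e) : option (Ledge e3)) with Some l => inr (inr l) | None => rt e end.

Lemma rh_e2 : rh (val e2) = inl (inl e3).
Proof. by rewrite /rh valD insubF // eqxx. Qed.

Lemma rh_other (e : fE B) (H : toD e != e2) : rh e = inl (inr (Sub (toD e) H)).
Proof. by rewrite /rh insubT. Qed.

Lemma rt_inj e e' : e != eps -> e' != eps -> rt e = rt e' -> e = e'.
Proof. by move=> H H' [] /toD_inj; apply. Qed.

Lemma rh_inj e e' : e != eps -> e' != eps -> rh e = rh e' -> e = e'.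
Proof.
move=> H H'; rewrite /rh.
case: insubP => [d Hd Ed|Hd]; case: insubP => [d' Hd' Ed'|Hd'] //.
- by move=> [] Edd; apply: (toD_inj H H'); rewrite -Ed -Ed' Edd.
- by move=> _; apply: (toD_inj H H'); move: Hd Hd'; rewrite !negbK => /eqP -> /eqP ->.
Qed.

Local Notation VT := (vt e2 e3).
Local Notation VH := (vh e2 e3).
Local Notation VW := (vW e2 e3).
Local Notation VCW := (vCW e2 e3).

Lemma vD_neq_k (v : fV D) : kappa <> val v.
Proof. by move=> E; move: (valP v); rewrite -E eqxx andbF. Qed.
Lemma vD_neq_i (v : fV D) : iota <> val v.
Proof. by move=> E; move: (valP v); rewrite -E eqxx. Qed.

Lemma lo_h_not_vt (d : fE D) v : lo_h e2 e3 d <> Some (VT v).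
Proof.
rewrite /lo_h; case: (d == e3) => //; case: (lo d) => [w|] //.
by case: (insub d).
Qed.

Lemma lo_t_not_vh (d : fE D) v : d != e3 -> lo_t e2 e3 d <> Some (VH v).
Proof.
rewrite /lo_t => /negbTE ->; case: (lo d) => [w|] //.
by case: (insub d).
Qed.

Lemma up_t_not_vh (d : fE D) v : up_t e2 e3 d <> Some (VH v).
Proof.
rewrite /up_t; case: (d == e2) => //; case: (up d) => [w|] //.
by case: (insub d).
Qed.

Lemma up_h_not_vt (d : fE D) v : up_h e2 e3 d <> Some (VT v).
Proof. rewrite /up_h; case: (up d) => [w|] //; by case: (insub d). Qed.

Lemma eps_lo_ne (e : fE B) (v : fV D) : lo e = Some (val v) -> e != eps.
Proof.
move=> H; apply/eqP => E; move: H; rewrite E Hlo_eps => -[] Ek.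
exact: (vD_neq_k Ek).
Qed.

Lemma eps_up_ne (e : fE B) (v : fV D) : up e = Some (val v) -> e != eps.
Proof.
move=> H; apply/eqP => E; move: H; rewrite E Hup_eps => -[] Ek.
exact: (vD_neq_i Ek).
Qed.

Lemma Q1 (e' : fE C) (v : fV D) :
  loC e' = Some (VT v) <-> exists e, lo e = Some (val v) /\ rt e = e'.
Proof.
split.
- case: e' => [[d|d]|[u|l]] //=.
  + rewrite /lo_t; case: eqP => [_|_]; first by move/lo_h_not_vt.
    case Ed: (lo d) => [w|]; last by case: (insub d).
    case=> Ew; exists (val d); rewrite /rt valD; split => //.
    by apply/loD_some; rewrite Ed Ew.
  + by move/lo_h_not_vt.
- case=> e [He <-]; have Hne := eps_lo_ne He.
  rewrite /= /lo_t; case: eqP => [Ed|_].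
    by move: He; rewrite -(toDK Hne) Ed Hlo3 => -[] Ek; case: (vD_neq_k Ek).
  have -> : lo (toD e) = Some v by apply/loD_some; rewrite toDK.
  done.
Qed.

Lemma Q2 (e' : fE C) (v : fV D) :
  upC e' = Some (VT v) <-> exists e, up e = Some (val v) /\ rt e = e'.
Proof.
split.
- case: e' => [[d|d]|[u|l]] //=.
  + rewrite /up_t; case: eqP => [_|_] //.
    case Ed: (up d) => [w|]; last by case: (insub d).
    case=> Ew; exists (val d); rewrite /rt valD; split => //.
    by apply/upD_some; rewrite Ed Ew.
  + by move/up_h_not_vt.
- case=> e [He <-]; have Hne := eps_up_ne He.
  rewrite /= /up_t; case: eqP => [Ed|_].
    by move: He; rewrite -(toDK Hne) Ed Hup2 => -[] Ek; case: (vD_neq_i Ek).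
  have -> : up (toD e) = Some v by apply/upD_some; rewrite toDK.
  done.
Qed.

Lemma toD_ne_e2 (e : fE B) : e != eps -> e != val e2 -> toD e != e2.
Proof. by move=> H1 H2; apply: contra H2 => /eqP <-; rewrite toDK. Qed.

Lemma rh_sub (d : {x : fE D | x != e2}) : rh (val (val d)) = inl (inr d).
Proof.
have H : toD (val (val d)) != e2 by rewrite valD (valP d).
rewrite (rh_other H).
by congr (inl (inr _)); apply: val_inj; rewrite SubK valD.
Qed.

Lemma Q3 (e' : fE C) (v : fV D) :
  loC e' = Some (VH v) <-> exists e, lo e = Some (val v) /\ rh e = e'.
Proof.
split.
- case: e' => [[d|d]|[u|l]] //=.
  + case: (boolP (d == e3)) => [/eqP Ed|Hd]; last by move/(lo_t_not_vh Hd).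
    rewrite /lo_t Ed eqxx /lo_h; case: eqP => // _.
    case Ed2: (lo e2) => [w|]; last by case: (insub e2).
    case=> Ew; exists (val e2); rewrite rh_e2; split => //.
    by apply/loD_some; rewrite Ed2 Ew.
  + rewrite /lo_h; case: eqP => // _.
    case Ed: (lo (val d)) => [w|]; last by case: (insub (val d)).
    case=> Ew; exists (val (val d)); rewrite rh_sub; split => //.
    by apply/loD_some; rewrite Ed Ew.
- case=> e [He <-]; have Hne := eps_lo_ne He.
  case: (boolP (e == val e2)) => [/eqP Ee|Ee].
  + rewrite Ee rh_e2 /= /lo_t eqxx /lo_h; case: eqP => [E23|_].
      by move: He; rewrite Ee E23 Hlo3 => -[] Ek; case: (vD_neq_k Ek).
    have -> : lo e2 = Some v by apply/loD_some; rewrite -Ee.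
    done.
  + rewrite (rh_other (toD_ne_e2 Hne Ee)) /= /lo_h; case: eqP => [Ed|_].
      by move: He; rewrite -(toDK Hne) Ed Hlo3 => -[] Ek; case: (vD_neq_k Ek).
    have -> : lo (toD e) = Some v by apply/loD_some; rewrite toDK.
    done.
Qed.

Lemma Q4 (e' : fE C) (v : fV D) :
  upC e' = Some (VH v) <-> exists e, up e = Some (val v) /\ rh e = e'.
Proof.
split.
- case: e' => [[d|d]|[u|l]] //=.
  + by move/up_t_not_vh.
  + rewrite /up_h.
    case Ed: (up (val d)) => [w|]; last by case: (insub (val d)).
    case=> Ew; exists (val (val d)); rewrite rh_sub; split => //.
    by apply/upD_some; rewrite Ed Ew.
- case=> e [He <-]; have Hne := eps_up_ne He.
  have Ee : e != val e2.
    by apply/eqP => Ee; move: He; rewrite Ee Hup2 => -[] Ek; case: (vD_neq_i Ek).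
  rewrite (rh_other (toD_ne_e2 Hne Ee)) /= /up_h.
  have -> : up (toD e) = Some v by apply/upD_some; rewrite toDK.
  done.
Qed.

Local Notation VCo := (@vCocon D e2 e3).
Local Notation VCn := (@vCon D e2 e3).

Lemma lo_h_cases (d : fE D) :
  [\/ lo_h e2 e3 d = Some VCW, exists w, lo_h e2 e3 d = Some (VH w),
      exists l, lo_h e2 e3 d = Some (VCn l) | lo_h e2 e3 d = None].
Proof.
rewrite /lo_h; case: eqP => _; first by constructor 1.
case: (lo d) => [w|]; first by constructor 2; exists w.
case: (insub d) => [l|] /=; [constructor 3; by exists l | by constructor 4].
Qed.

Lemma lo_t_cases (d : fE D) : d != e3 ->
  [\/ exists w, lo_t e2 e3 d = Some (VT w),
      exists l, lo_t e2 e3 d = Some (VCn l) | lo_t e2 e3 d = None].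
Proof.
rewrite /lo_t => /negbTE ->.
case: (lo d) => [w|]; first by constructor 1; exists w.
case: (insub d) => [l|] /=; [constructor 2; by exists l | by constructor 3].
Qed.

Lemma up_t_cases (d : fE D) :
  [\/ up_t e2 e3 d = Some VW, exists w, up_t e2 e3 d = Some (VT w),
      exists u, up_t e2 e3 d = Some (VCo u) | up_t e2 e3 d = None].
Proof.
rewrite /up_t; case: eqP => _; first by constructor 1.
case: (up d) => [w|]; first by constructor 2; exists w.
case: (insub d) => [u|] /=; [constructor 3; by exists u | by constructor 4].
Qed.

Lemma up_h_cases (d : fE D) :
  [\/ exists w, up_h e2 e3 d = Some (VH w),
      exists u, up_h e2 e3 d = Some (VCo u) | up_h e2 e3 d = None].
Proof.
rewrite /up_h; case: (up d) => [w|]; first by constructor 1; exists w.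
case: (insub d) => [u|] /=; [constructor 2; by exists u | by constructor 3].
Qed.

Ltac kill_cases :=
  let E := fresh in let H := fresh in
  move=> E H; (lazymatch type of E with ex _ => case: E => ? E | _ => idtac end); rewrite E in H; discriminate.

Lemma Q5 (e' : fE C) u : loC e' = Some (VCo u) <-> e' = inr (inl u).
Proof.
split; last by move=> ->.
case: e' => [[d|d]|[u'|l]] //=.
- case: (boolP (d == e3)) => [/eqP Ed|Hd].
  + rewrite /lo_t Ed eqxx; by case: (lo_h_cases e2); kill_cases.
  + by case: (lo_t_cases Hd); kill_cases.
- by case: (lo_h_cases (val d)); kill_cases.
- by case=> ->.
Qed.

Lemma Q6 (e' : fE C) u (e : fE B) : toD e = val u ->
  upC e' = Some (VCo u) <-> e' = rt e \/ e' = rh e.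
Proof.
move=> Eu; have /andP [/eqP Hu1 Hu2] := valP u.
have Hr : rh e = inl (inr (Sub (val u) Hu2)).
  by rewrite /rh Eu insubT.
split.
- case: e' => [[d|d]|[u'|l]] //=.
  + rewrite /up_t; case: eqP => // _; case: (up d) => // .
    case: insubP => // u' _ Ed [] Eu'; left; rewrite /rt Eu -Eu' Ed //.
  + rewrite /up_h; case: (up (val d)) => //.
    case: insubP => // u' _ Ed [] Eu'; right; rewrite Hr; congr (inl (inr _)).
    by apply: val_inj; rewrite /= -Eu' Ed.
- case=> ->; rewrite ?Hr /= /rt ?Eu.
  + rewrite /up_t (negbTE Hu2) Hu1 /=; by rewrite valK.
  + rewrite /up_h Hu1 /=; by rewrite valK.
Qed.

Lemma Q8 (e' : fE C) l : upC e' = Some (VCn l) <-> e' = inr (inr l).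
Proof.
split; last by move=> ->.
case: e' => [[d|d]|[u'|l']] //=.
- by case: (up_t_cases d); kill_cases.
- by case: (up_h_cases (val d)); kill_cases.
- by case=> ->.
Qed.

Lemma Q7 (e' : fE C) l (e : fE B) : toD e = val l ->
  loC e' = Some (VCn l) <-> e' = rt e \/ e' = rh e.
Proof.
move=> El; have /andP [/eqP Hl1 Hl3] := valP l.
split.
- case: e' => [[d|d]|[u'|l']] //=.
  + rewrite /lo_t; case: eqP => [Ed|_].
    * rewrite /lo_h; case: eqP => // _; case: (lo e2) => //.
      case: insubP => // l' _ E2 [] El'; right.
      by rewrite /rh El -El' E2 insubF ?eqxx // Ed.
    * case: (lo d) => //; case: insubP => // l' _ Ed [] El'; left.
      by rewrite /rt El -El' Ed.
  + rewrite /lo_h; case: eqP => // _; case: (lo (val d)) => //.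
    case: insubP => // l' _ Ed [] El'; right.
    have Hn : toD e != e2 by rewrite El -El' Ed (valP d).
    rewrite (rh_other Hn); congr (inl (inr _)); apply: val_inj.
    by rewrite SubK El -El' Ed.
- case=> ->.
  + by rewrite /= /rt El /lo_t (negbTE Hl3) Hl1 /= valK.
  + rewrite /rh El; case: insubP => [d Hd Ed|].
    * by rewrite /= /lo_h Ed (negbTE Hl3) Hl1 /= valK.
    * rewrite negbK => /eqP E2.
      by rewrite /= /lo_t eqxx /lo_h -E2 (negbTE Hl3) Hl1 /= valK.
Qed.

Lemma Q9 (e' : fE C) : loC e' <> Some VW.
Proof.
case: e' => [[d|d]|[u'|l']] //=.
- case: (boolP (d == e3)) => [/eqP Ed|Hd].
  + rewrite /lo_t Ed eqxx; by case: (lo_h_cases e2); kill_cases.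
  + by case: (lo_t_cases Hd); kill_cases.
- by case: (lo_h_cases (val d)); kill_cases.
Qed.

Lemma Q9' (e' : fE C) : upC e' = Some VW <-> e' = rt (val e2).
Proof.
rewrite /rt valD; split; last by move=> -> /=; rewrite /up_t eqxx.
case: e' => [[d|d]|[u'|l']] //=.
- rewrite /up_t; case: eqP => [->//|_]; case: (up d) => //; by case: (insub d).
- by case: (up_h_cases (val d)); kill_cases.
Qed.

Lemma Q10 (e' : fE C) : loC e' = Some VCW <-> e' = rh (val e3).
Proof.
split.
- case: e' => [[d|d]|[u'|l']] //=.
  + case: (boolP (d == e3)) => [/eqP Ed|Hd]; last by case: (lo_t_cases Hd); kill_cases.
    rewrite /lo_t Ed eqxx /lo_h; case: eqP => [E23|_]; last first.
      by case: (lo e2) => //; case: (insub e2).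
    have E' : val e3 = val e2 by rewrite E23.
    by move=> _; rewrite E' rh_e2.
  + rewrite /lo_h; case: eqP => [Ed|_]; last first.
      by case: (lo (val d)) => //; case: (insub (val d)).
    have E' : val e3 = val (val d) by apply: congr1; symmetry; exact Ed.
    by move=> _; rewrite E' rh_sub.
- move=> ->; case: (boolP (e3 == e2)) => [/eqP E|Hn].
  + have E' : val e3 = val e2 by rewrite E.
    by rewrite E' rh_e2 /= /lo_t eqxx /lo_h E eqxx.
  + have Hn' : toD (val e3) != e2 by rewrite valD.
    by rewrite (rh_other Hn') /= valD /lo_h eqxx.
Qed.

Lemma Q10' (e' : fE C) : upC e' <> Some VCW.
Proof.
case: e' => [[d|d]|[u'|l']] //=.
- by case: (up_t_cases d); kill_cases.
- by case: (up_h_cases (val d)); kill_cases.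
Qed.

Lemma Q11 (e' : fE C) : upC e' = None <-> exists u, e' = inr (inl u).
Proof.
have Hh (d : fE D) : d != e2 -> up d = None -> omap (VCo) (insub d) <> None.
  move=> Hd Eu; case: insubP => //; by rewrite Eu eqxx Hd.
split; last by case=> u ->.
case: e' => [[d|d]|[u'|l']] //=; last by exists u'.
- rewrite /up_t; case: eqP => // /eqP Hd; case Eu: (up d) => //.
  by move/(Hh _ Hd Eu).
- rewrite /up_h; case Eu: (up (val d)) => //.
  by move/(Hh _ (valP d) Eu).
Qed.

Lemma Q12 (e' : fE C) : loC e' = None <-> exists l, e' = inr (inr l).
Proof.
have Hh (d : fE D) : d != e3 -> lo d = None -> omap (VCn) (insub d) <> None.
  move=> Hd Eu; case: insubP => //; by rewrite Eu eqxx Hd.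
have Hh2 (d : fE D) : lo_h e2 e3 d <> None.
  rewrite /lo_h; case: eqP => // /eqP Hd; case El: (lo d) => //.
  by move/(Hh _ Hd El).
split; last by case=> l ->.
case: e' => [[d|d]|[u'|l']] //=; last by exists l'.
- rewrite /lo_t; case: eqP => [_|/eqP Hd]; first by move/Hh2.
  case El: (lo d) => //.
  by move/(Hh _ Hd El).
- by move/Hh2.
Qed.

Definition mt (p : At * fE B) : At * fE C := (p.1, rt p.2).
Definition mh (p : At * fE B) : At * fE C := (p.1, rh p.2).
Definition mU (p : At * fE B) : At * fE C := (p.1, fU p.2).
Definition mL (p : At * fE B) : At * fE C := (p.1, fL p.2).

Lemma labels_fm (g : fE B -> fE C) x :
  labels (fmap (fun p : At * fE B => (p.1, g p.2)) x) = map g (labels x).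
Proof. by rewrite /labels fatoms_fmap -!map_comp. Qed.

Lemma lab_ipre_imap (g : fE B -> fE C) (i : inst (At * fE B)) :
  labels (ipre (imap (fun p : At * fE B => (p.1, g p.2)) i)) = map g (labels (ipre i)).
Proof. by rewrite -fmap_ipre labels_fm. Qed.
Lemma lab_icon_imap (g : fE B -> fE C) (i : inst (At * fE B)) :
  labels (icon (imap (fun p : At * fE B => (p.1, g p.2)) i)) = map g (labels (icon i)).
Proof. by rewrite -fmap_icon labels_fm. Qed.

Lemma V1 (i : inst (At * fE B)) (v : fV D) : vok i (val v) -> vok (F := C) (imap mt i) (VT v).
Proof.
case=> H1 H2 H3; split.
- by rewrite ilab_imap H1.
- rewrite lab_ipre_imap; apply: exact_img H2 _ _.
  + by move=> e e' He He'; apply: rt_inj; [exact: (eps_lo_ne He)|exact: (eps_lo_ne He')].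
  + by move=> e'; rewrite Q1.
- rewrite lab_icon_imap; apply: exact_img H3 _ _.
  + by move=> e e' He He'; apply: rt_inj; [exact: (eps_up_ne He)|exact: (eps_up_ne He')].
  + by move=> e'; rewrite Q2.
Qed.

Lemma V2 (i : inst (At * fE B)) (v : fV D) : vok i (val v) -> vok (F := C) (imap mh i) (VH v).
Proof.
case=> H1 H2 H3; split.
- by rewrite ilab_imap H1.
- rewrite lab_ipre_imap; apply: exact_img H2 _ _.
  + by move=> e e' He He'; apply: rh_inj; [exact: (eps_lo_ne He)|exact: (eps_lo_ne He')].
  + by move=> e'; rewrite Q3.
- rewrite lab_icon_imap; apply: exact_img H3 _ _.
  + by move=> e e' He He'; apply: rh_inj; [exact: (eps_up_ne He)|exact: (eps_up_ne He')].
  + by move=> e'; rewrite Q4.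
Qed.

Lemma exact1 (E : eqType) (x : E) (Q : E -> Prop) : (forall e, Q e <-> e = x) -> exact_labels [:: x] Q.
Proof. by move=> H; split => // e; rewrite H inE; split => [/eqP|->]. Qed.

Lemma exact0 (E : eqType) (Q : E -> Prop) : (forall e, ~ Q e) -> exact_labels [::] Q.
Proof. by move=> H; split => // e; split => // /H. Qed.

Lemma exact2 (E : eqType) (x y : E) (Q : E -> Prop) : x != y ->
  (forall e, Q e <-> e = x \/ e = y) -> exact_labels [:: x; y] Q.
Proof.
move=> Hxy H; split; first by rewrite /= inE Hxy.
by move=> e; rewrite H !inE; split => [/orP [] /eqP ->|[] ->]; rewrite ?eqxx ?orbT; auto.
Qed.

Lemma up_none_eps (e : fE B) : up e = None -> e != eps.
Proof. by move=> H; apply/eqP => E; move: H; rewrite E Hup_eps. Qed.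
Lemma lo_none_eps (e : fE B) : lo e = None -> e != eps.
Proof. by move=> H; apply/eqP => E; move: H; rewrite E Hlo_eps. Qed.

Lemma U_of (e : fE B) : up e = None ->
  exists u : Uedge e2, [/\ toD e = val u, fU e = inr (inl u) & toD e != e2].
Proof.
move=> Hu; have Hne := up_none_eps Hu.
have Hn2 : toD e != e2.
  by apply/eqP => E; move: Hu; rewrite -(toDK Hne) E Hup2.
have HP : (up (toD e) == None) && (toD e != e2).
  by rewrite Hn2 andbT; apply/eqP/upDN; left; rewrite toDK.
exists (Sub (toD e) HP); split => //; by rewrite /fU insubT.
Qed.

Lemma L_of (e : fE B) : lo e = None ->
  exists l : Ledge e3, [/\ toD e = val l & fL e = inr (inr l)].
Proof.
move=> Hl; have Hne := lo_none_eps Hl.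
have Hn3 : toD e != e3.
  by apply/eqP => E; move: Hl; rewrite -(toDK Hne) E Hlo3.
have HP : (lo (toD e) == None) && (toD e != e3).
  by rewrite Hn3 andbT; apply/eqP/loDN; left; rewrite toDK.
exists (Sub (toD e) HP); split => //; by rewrite /fL insubT.
Qed.

Lemma V3 (p : At * fE B) (u : Uedge e2) : toD p.2 = val u -> fU p.2 = inr (inl u) ->
  vok (F := C) (ICocon (mU p) (mt p) (mh p)) (VCo u).
Proof.
move=> Eu Ef; split => //.
- rewrite /= /mU /= Ef; apply: exact1 => e; exact: Q5.
- rewrite /= /mt /mh /=; apply: exact2; last by move=> e; apply: Q6.
  have /andP [_ Hu2] := valP u.
  by rewrite /rt /rh Eu insubT.
Qed.

Lemma V4 (p : At * fE B) (l : Ledge e3) : toD p.2 = val l -> fL p.2 = inr (inr l) ->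
  vok (F := C) (ICon (mt p) (mh p) (mL p)) (VCn l).
Proof.
move=> El Ef; split => //.
- rewrite /= /mt /mh /=; apply: exact2; last by move=> e; apply: Q7.
  have /andP [_ Hl3] := valP l.
  rewrite /rt /rh El; case: insubP => [d _ _ //|_].
  by apply/eqP => -[] E; have E' : val l = e3 := E; move: Hl3; rewrite E' eqxx.
- rewrite /= /mL /= Ef; apply: exact1 => e; exact: Q8.
Qed.

Lemma V5 (x : At) : vok (F := C) (IWk (x, rt (val e2))) VW.
Proof.
split => //.
- by apply: exact0 => e; apply: Q9.
- by apply: exact1 => e; apply: Q9'.
Qed.

Lemma V6 (x : At) : vok (F := C) (ICowk (x, rh (val e3))) VCW.
Proof.
split => //.
- by apply: exact1 => e; apply: Q10.
- by apply: exact0 => e; apply: Q10'.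
Qed.

Lemma exact_prem (a' : fml (At * fE B)) : exact_labels (labels a') (fun e => up e = None) ->
  exact_labels (labels (fmap mU a')) (fun e => upC e = None).
Proof.
move=> H; rewrite labels_fm; apply: exact_img H _ _.
- move=> e e' He He'; have [u [Eu Fu _]] := U_of He; have [u' [Eu' Fu' _]] := U_of He'.
  rewrite Fu Fu' => -[] E.
  by apply: (toD_inj (up_none_eps He) (up_none_eps He')); rewrite Eu Eu' E.
- move=> e'; rewrite Q11; split.
  + case=> u ->; have /andP [/eqP Hu1 Hu2] := valP u.
    have Hup : up (val (val u)) = None.
      by case/upDN: Hu1 => // E; move: Hu2; rewrite E eqxx.
    exists (val (val u)); split => //.
    have [u'' [Eu Fu _]] := U_of Hup; rewrite Fu; congr (inr (inl _)).
    by apply: val_inj; rewrite -Eu valD.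
  + by case=> e [He <-]; have [u [_ Fu _]] := U_of He; exists u.
Qed.

Lemma exact_concl (b' : fml (At * fE B)) : exact_labels (labels b') (fun e => lo e = None) ->
  exact_labels (labels (fmap mL b')) (fun e => loC e = None).
Proof.
move=> H; rewrite labels_fm; apply: exact_img H _ _.
- move=> e e' He He'; have [u [Eu Fu]] := L_of He; have [u' [Eu' Fu']] := L_of He'.
  rewrite Fu Fu' => -[] E.
  by apply: (toD_inj (lo_none_eps He) (lo_none_eps He')); rewrite Eu Eu' E.
- move=> e'; rewrite Q12; split.
  + case=> u ->; have /andP [/eqP Hu1 Hu2] := valP u.
    have Hlo : lo (val (val u)) = None.
      by case/loDN: Hu1 => // E; move: Hu2; rewrite E eqxx.
    exists (val (val u)); split => //.
    have [u'' [Eu Fu]] := L_of Hlo; rewrite Fu; congr (inr (inr _)).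
    by apply: val_inj; rewrite -Eu valD.
  + by case=> e [He <-]; have [u [_ Fu]] := L_of He; exists u.
Qed.


Lemma fmap_ext X Y (f g : X -> Y) x : f =1 g -> fmap f x = fmap g x.
Proof. by move=> H; elim: x => //= [p|a -> b ->|a -> b ->] //; rewrite H. Qed.
Lemma imap_ext X Y (f g : X -> Y) i : f =1 g -> imap f i = imap g i.
Proof. by move=> H; case: i => /= *; rewrite ?H ?(fmap_ext _ H). Qed.

Variables (a' b' : fml (At * fE B)) (s1 s2 s3 : seq (step (At * fE B)))
  (ci ck : ctx (At * fE B)) (ii ik : inst (At * fE B)) (xe : At).
Hypotheses (Hd1 : deriv a' s1 (plug ci (ipre ii)))
  (Hd2 : deriv (plug ci (icon ii)) s2 (plug ck (ipre ik)))
  (Hd3 : deriv (plug ck (icon ik)) s3 b')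
  (Hii : ii = IInt (xe, eps) (bar xe, val e2) \/ ii = IInt (bar xe, val e2) (xe, eps))
  (Hikk : ik = ICut (xe, eps) (bar xe, val e3) \/ ik = ICut (bar xe, val e3) (xe, eps))
  (Hpre : exact_labels (labels a') (fun e => up e = None))
  (Hcon : exact_labels (labels b') (fun e => lo e = None)).
Local Notation S := (AI s1 ++ AI s2 ++ AI s3).
Hypotheses (Hv : forall i, List.In i S -> exists v, vok i v)
  (Hcnt : forall v, count (fun i => owner i == Some v) S = ((v != iota) && (v != kappa)))
  (Hok : forall i, List.In i S -> inst_ok bar (imap fst i)).

Lemma S_vok i : List.In i S -> exists v' : fV D, vok i (val v').
Proof.
move=> Hi; have [v Hvv] := Hv Hi; have Ho := vok_owner Hvv.
case E: (insub v : option (fV D)) => [v'|]; first by exists v'; rewrite -(proj1 (vD_some _ _) E).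
exfalso; case/vD_none: E => Ev; subst v.
- have H0 := Hcnt iota; rewrite eqxx /= in H0; have := count_In0 H0 Hi; by rewrite /= Ho eqxx.
- have H0 := Hcnt kappa; rewrite eqxx andbF in H0; have := count_In0 H0 Hi; by rewrite /= Ho eqxx.
Qed.

Lemma S_atoms i : List.In i S -> forall p, List.In p (fatoms (ipre i) ++ fatoms (icon i)) -> p.2 != eps.
Proof.
move=> Hi p Hp0; have [v' [_ [_ H2] [_ H3]]] := S_vok Hi.
case: (List.in_app_or _ _ _ Hp0) => Hp.
- by apply: (@eps_lo_ne _ v'); apply/H2; apply: In_labels.
- by apply: (@eps_up_ne _ v'); apply/H3; apply: In_labels.
Qed.

Lemma S_atom i : List.In i S -> isatom i.
Proof. by move=> /S_vok [v' [H _ _]]; rewrite /isatom H. Qed.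

Definition sgt (p : At * fE B) : fml (At * fE C) := if p.2 == eps then Ft else Atm (mt p).
Definition sgh (p : At * fE B) : fml (At * fE C) := if p.2 == eps then Ff else Atm (mh p).
Local Notation ibt := (ibind sgt mt).
Local Notation ibh := (ibind sgh mh).

Lemma ibind_at X Y (sg : X -> fml Y) r i : isatom i -> ibind sg r i = imap r i.
Proof. by case: i. Qed.

Lemma Rbt x s y : deriv x s y -> (forall i, List.In i (AI s) -> List.In i S) ->
  R (fbind sgt x) (fbind sgt y) (map ibt (AI s)).
Proof.
move=> H HS; apply: R_bind H _ => i Hi p Hp.
by rewrite /sgt (negbTE (S_atoms (HS _ Hi) Hp)).
Qed.

Lemma Rbh x s y : deriv x s y -> (forall i, List.In i (AI s) -> List.In i S) ->
  R (fbind sgh x) (fbind sgh y) (map ibh (AI s)).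
Proof.
move=> H HS; apply: R_bind H _ => i Hi p Hp.
by rewrite /sgh (negbTE (S_atoms (HS _ Hi) Hp)).
Qed.

Lemma in_S1 i : List.In i (AI s1) -> List.In i S.
Proof. by move=> H; apply: List.in_or_app; left. Qed.
Lemma in_S2 i : List.In i (AI s2) -> List.In i S.
Proof. by move=> H; apply: List.in_or_app; right; apply: List.in_or_app; left. Qed.
Lemma in_S3 i : List.In i (AI s3) -> List.In i S.
Proof. by move=> H; apply: List.in_or_app; right; apply: List.in_or_app; right. Qed.

Definition zC : fml (At * fE C) := Atm (bar xe, inl (inl e3)).
Definition wt : At * fE C := (bar xe, rt (val e2)).
Definition wh : At * fE C := (bar xe, rh (val e3)).

Lemma rt_e3 : rt (val e3) = inl (inl e3).
Proof. by rewrite /rt valD. Qed.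

Lemma Rt_int : R (fbind sgt (ipre ii)) (fbind sgt (icon ii)) [:: IWk wt].
Proof.
case: Hii => -> /=; rewrite /sgt /= eqxx (negbTE e2_neq_eps).
- apply: (R_eql (l := [::] ++ [:: IWk wt])) => //.
  exact: R_trans (R_unitorV _) (R_orR _ (R_wk _)).
- apply: (R_eql (l := [::] ++ [::] ++ [:: IWk wt])) => //.
  exact: R_tr3 (R_unitorV _) (R_comor _ _) (R_orL _ (R_wk _)).
Qed.

Lemma Rt_cut : R (fbind sgt (ipre ik)) zC [::].
Proof.
rewrite /zC -rt_e3.
case: Hikk => -> /=; rewrite /sgt /= eqxx (negbTE e3_neq_eps).
- apply: (R_eql (l := [::] ++ [::])) => //.
  exact: R_trans (R_comand _ _) (R_unitand _).
- exact: R_unitand.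
Qed.

Lemma Rh_int0 : R (FAnd zC (fbind sgh (ipre ii))) (fbind sgh (icon ii)) [::].
Proof.
rewrite /zC -rh_e2.
case: Hii => -> /=; rewrite /sgh /= eqxx (negbTE e2_neq_eps).
- apply: (R_eql (l := [::] ++ [::] ++ [::])) => //.
  exact: R_tr3 (R_unitand _) (R_unitorV _) (R_comor _ _).
- apply: (R_eql (l := [::] ++ [::])) => //.
  exact: R_trans (R_unitand _) (R_unitorV _).
Qed.

Lemma Rh_cut : R (fbind sgh (ipre ik)) (fbind sgh (icon ik)) [:: ICowk wh].
Proof.
case: Hikk => -> /=; rewrite /sgh /= eqxx (negbTE e3_neq_eps).
- apply: (R_eql (l := [:: ICowk wh] ++ [::])) => //.
  exact: R_trans (R_andR _ (R_cowk _)) (R_unitand _).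
- apply: (R_eql (l := [:: ICowk wh] ++ [::] ++ [::])) => //.
  exact: R_tr3 (R_andL _ (R_cowk _)) (R_comand _ _) (R_unitand _).
Qed.

Definition Lt := map ibt (AI s1) ++ [:: IWk wt] ++ map ibt (AI s2) ++ [::] ++ map ibt (AI s3).
Definition Lh := map ibh (AI s1) ++ [::] ++ map ibh (AI s2) ++ [:: ICowk wh] ++ map ibh (AI s3).

Lemma R_tilde : R (fbind sgt a') (FOr (fbind sgt b') zC) Lt.
Proof.
have T1 := Rbt Hd1 in_S1.
have T2 : R (fbind sgt (plug ci (ipre ii))) (fbind sgt (plug ci (icon ii))) [:: IWk wt].
  by rewrite !plug_bind; apply: R_plug; exact: Rt_int.
have T3 := Rbt Hd2 in_S2.
have T4 : R (fbind sgt (plug ck (ipre ik))) (FOr (fbind sgt (plug ck (icon ik))) zC) [::].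
  rewrite !plug_bind; have -> : fbind sgt (icon ik) = Ff by case: Hikk => ->.
  apply: (R_eql (l := [::] ++ [::])) => //.
  exact: R_trans (R_plug _ Rt_cut) (R_pullout _ _).
have T5 := R_orL zC (Rbt Hd3 in_S3).
exact: R_trans T1 (R_trans T2 (R_trans T3 (R_trans T4 T5))).
Qed.

Lemma R_hat : R (FAnd zC (fbind sgh a')) (fbind sgh b') Lh.
Proof.
have H1 := R_andR zC (Rbh Hd1 in_S1).
have H2 : R (FAnd zC (fbind sgh (plug ci (ipre ii)))) (fbind sgh (plug ci (icon ii))) [::].
  rewrite !plug_bind; apply: (R_eql (l := [::] ++ [::])) => //.
  exact: R_trans (R_pushin _ _ _) (R_plug _ Rh_int0).
have H3 := Rbh Hd2 in_S2.
have H4 : R (fbind sgh (plug ck (ipre ik))) (fbind sgh (plug ck (icon ik))) [:: ICowk wh].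
  by rewrite !plug_bind; apply: R_plug; exact: Rh_cut.
have H5 := Rbh Hd3 in_S3.
exact: R_trans H1 (R_trans H2 (R_trans H3 (R_trans H4 H5))).
Qed.

Lemma a_noeps p : List.In p (fatoms a') -> p.2 != eps.
Proof. by move=> /In_labels /(proj2 Hpre) /up_none_eps. Qed.
Lemma b_noeps p : List.In p (fatoms b') -> p.2 != eps.
Proof. by move=> /In_labels /(proj2 Hcon) /lo_none_eps. Qed.

Definition Lcocon := map (fun p => ICocon (mU p) (mt p) (mh p)) (fatoms a').
Definition Lcon := map (fun p => ICon (mt p) (mh p) (mL p)) (fatoms b').
Definition Lall := Lcocon ++ (Lt ++ ([::] ++ (Lh ++ Lcon))).

Lemma R_all : R (fmap mU a') (fmap mL b') Lall.
Proof.
have At_ : fbind sgt a' = fmap mt a'.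
  by apply: fbind_fmap => p Hp; rewrite /sgt (negbTE (a_noeps Hp)).
have Ah_ : fbind sgh a' = fmap mh a'.
  by apply: fbind_fmap => p Hp; rewrite /sgh (negbTE (a_noeps Hp)).
have Bt_ : fbind sgt b' = fmap mt b'.
  by apply: fbind_fmap => p Hp; rewrite /sgt (negbTE (b_noeps Hp)).
have Bh_ : fbind sgh b' = fmap mh b'.
  by apply: fbind_fmap => p Hp; rewrite /sgh (negbTE (b_noeps Hp)).
have G1 := R_cocontr mU mt mh a'.
have G2 := R_andL (fmap mh a') R_tilde.
have G3 : R (FAnd (FOr (fbind sgt b') zC) (fmap mh a')) (FOr (fbind sgt b') (FAnd zC (fmap mh a'))) [::].
  apply: (R_eql (l := [::] ++ [::] ++ [::] ++ [::] ++ [::])) => //.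
  apply: R_trans (R_comand _ _) _; apply: R_trans (R_andR _ (R_comor _ _)) _.
  apply: R_trans (R_sw _ _ _) _; apply: R_trans (R_comor _ _) _.
  exact: R_orR _ (R_comand _ _).
have G4 := R_orR (fbind sgt b') R_hat.
have G5 := R_contr mL mt mh b'.
rewrite At_ Bt_ in G2; rewrite Ah_ in G4; rewrite Bh_ Bt_ in G4; rewrite Bt_ in G3.
exact: R_trans G1 (R_trans G2 (R_trans G3 (R_trans G4 G5))).
Qed.

Lemma In_cat T (x : T) l1 l2 : List.In x (l1 ++ l2) -> List.In x l1 \/ List.In x l2.
Proof. exact: List.in_app_or. Qed.

Lemma In_consE T (x y : T) l : List.In x (y :: l) -> y = x \/ List.In x l.
Proof. by []. Qed.

Lemma In_mapE T U (f : T -> U) l y : List.In y (map f l) -> exists x, f x = y /\ List.In x l.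
Proof. exact: (proj1 (List.in_map_iff _ _ _)). Qed.

Lemma vok_t j : List.In j S -> exists v', vok (F := C) (ibt j) (VT v') /\ owner j = Some (val v').
Proof.
move=> Hj; have [v' Hv'] := S_vok Hj; exists v'; split; last exact: vok_owner Hv'.
by rewrite ibind_at ?S_atom //; apply: V1.
Qed.

Lemma vok_h j : List.In j S -> exists v', vok (F := C) (ibh j) (VH v') /\ owner j = Some (val v').
Proof.
move=> Hj; have [v' Hv'] := S_vok Hj; exists v'; split; last exact: vok_owner Hv'.
by rewrite ibind_at ?S_atom //; apply: V2.
Qed.

Lemma vok_cocon p : List.In p (fatoms a') ->
  exists u, [/\ vok (F := C) (ICocon (mU p) (mt p) (mh p)) (VCo u), toD p.2 = val u & p.2 != eps].
Proof.
move=> Hp; have Hu : up p.2 = None by apply/(proj2 Hpre); apply: In_labels.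
have [u [E1 E2 _]] := U_of Hu; exists u; split => //; last exact: up_none_eps.
exact: V3.
Qed.

Lemma vok_con p : List.In p (fatoms b') ->
  exists l, [/\ vok (F := C) (ICon (mt p) (mh p) (mL p)) (VCn l), toD p.2 = val l & p.2 != eps].
Proof.
move=> Hp; have Hu : lo p.2 = None by apply/(proj2 Hcon); apply: In_labels.
have [u [E1 E2]] := L_of Hu; exists u; split => //; last exact: lo_none_eps.
exact: V4.
Qed.

Lemma Lall_vok i : List.In i Lall -> exists v, vok (F := C) i v.
Proof.
have HS1 := in_S1; have HS2 := in_S2; have HS3 := in_S3.
rewrite /Lall /Lt /Lh /Lcocon /Lcon /= => H.
repeat match goal with
| H : List.In _ (_ ++ _) |- _ => case: (In_cat H) => {}H
| H : List.In _ (_ :: _) |- _ => case: (In_consE H) => [<-|{}H]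
| H : List.In _ [::] |- _ => case: H
| H : _ = _ \/ _ |- _ => case: H => [<-|{}H]
| H : False |- _ => case: H
| H : List.In _ (map _ _) |- _ => case: (In_mapE H) => ? [<- {}H]
end.
all: first
  [ by exists VW; exact: V5
  | by exists VCW; exact: V6
  | by have [u [? _ _]] := vok_cocon H; eexists; eauto
  | by have [u [? _ _]] := vok_con H; eexists; eauto
  | by have [v' [? _]] := vok_t (HS1 _ H); eexists; eauto
  | by have [v' [? _]] := vok_t (HS2 _ H); eexists; eauto
  | by have [v' [? _]] := vok_t (HS3 _ H); eexists; eauto
  | by have [v' [? _]] := vok_h (HS1 _ H); eexists; eauto
  | by have [v' [? _]] := vok_h (HS2 _ H); eexists; eauto
  | by have [v' [? _]] := vok_h (HS3 _ H); eexists; eauto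
  ].
Qed.

Local Notation P w := (fun i => owner (F := C) i == Some w).

Lemma own_t j (w : fV C) : List.In j S ->
  (owner (F := C) (ibt j) == Some w) = (if w is inl (inl v) then owner j == Some (val v) else false).
Proof.
move=> Hj; have [v' [H1 H2]] := vok_t Hj; rewrite (vok_owner H1) H2.
case: w => [[v|v]|w] //=.
Qed.

Lemma own_h j (w : fV C) : List.In j S ->
  (owner (F := C) (ibh j) == Some w) = (if w is inl (inr v) then owner j == Some (val v) else false).
Proof.
move=> Hj; have [v' [H1 H2]] := vok_h Hj; rewrite (vok_owner H1) H2.
case: w => [[v|v]|w] //=.
Qed.

Lemma cnt_t (w : fV C) : count (P w) (map ibt S) = (if w is inl (inl _) then 1 else 0).
Proof.
rewrite count_map (count_eqIn (Q := fun j => if w is inl (inl v) then owner j == Some (val v) else false));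
  last by move=> j Hj; exact: own_t.
case: w => [[v|v]|w]; last by rewrite count_pred0.
- by rewrite Hcnt; have /andP [-> ->] := valP v.
- by rewrite count_pred0.
Qed.

Lemma cnt_h (w : fV C) : count (P w) (map ibh S) = (if w is inl (inr _) then 1 else 0).
Proof.
rewrite count_map (count_eqIn (Q := fun j => if w is inl (inr v) then owner j == Some (val v) else false));
  last by move=> j Hj; exact: own_h.
case: w => [[v|v]|w]; last by rewrite count_pred0.
- by rewrite count_pred0.
- by rewrite Hcnt; have /andP [-> ->] := valP v.
Qed.

Lemma toD_eq_val (e : fE B) (d : fE D) : e != eps -> (toD e == d) = (e == val d).
Proof. by move=> H; apply/eqP/eqP => [<-|->]; rewrite ?toDK ?valD. Qed.

Lemma cnt_cocon (w : fV C) : count (P w) Lcocon = (if w is inr (inr (inl _)) then 1 else 0).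
Proof.
rewrite /Lcocon count_map.
rewrite (count_eqIn (Q := fun p => if w is inr (inr (inl u)) then p.2 == val (val u) else false)); last first.
  move=> p Hp; have [u0 [H1 H2 H3]] := vok_cocon Hp; rewrite /preim /= (vok_owner H1).
  case: w => [w|[w|[u|l]]] //=.
  rewrite -(toD_eq_val _ H3) H2; apply/eqP/eqP => [[->]|/val_inj ->] //.
case: w => [w|[w|[u|l]]]; rewrite ?count_pred0 //.
have -> : count (fun p : At * fE B => p.2 == val (val u)) (fatoms a') = count_mem (val (val u)) (labels a').
  by rewrite /labels count_map.
rewrite count_uniq_mem; last exact: (proj1 Hpre).
have /andP [/eqP Hu1 Hu2] := valP u.
have Hup : up (val (val u)) = None.
  by case/upDN: Hu1 => // E; move: Hu2; rewrite E eqxx.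
by have -> : val (val u) \in labels a' by apply/(proj2 Hpre).
Qed.

Lemma cnt_con (w : fV C) : count (P w) Lcon = (if w is inr (inr (inr _)) then 1 else 0).
Proof.
rewrite /Lcon count_map.
rewrite (count_eqIn (Q := fun p => if w is inr (inr (inr u)) then p.2 == val (val u) else false)); last first.
  move=> p Hp; have [u0 [H1 H2 H3]] := vok_con Hp; rewrite /preim /= (vok_owner H1).
  case: w => [w|[w|[u|l]]] //=.
  rewrite -(toD_eq_val _ H3) H2; apply/eqP/eqP => [[->]|/val_inj ->] //.
case: w => [w|[w|[u|l]]]; rewrite ?count_pred0 //.
have -> : count (fun p : At * fE B => p.2 == val (val l)) (fatoms b') = count_mem (val (val l)) (labels b').
  by rewrite /labels count_map.
rewrite count_uniq_mem; last exact: (proj1 Hcon).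
have /andP [/eqP Hu1 Hu2] := valP l.
have Hlo : lo (val (val l)) = None.
  by case/loDN: Hu1 => // E; move: Hu2; rewrite E eqxx.
by have -> : val (val l) \in labels b' by apply/(proj2 Hcon).
Qed.

Lemma Lall_cnt (w : fV C) : count (P w) Lall = 1.
Proof.
have Ct := cnt_t w; have Ch := cnt_h w; have Cc := cnt_cocon w; have Cn := cnt_con w.
rewrite !map_cat !count_cat in Ct Ch.
rewrite /Lall /Lt /Lh !count_cat /=.
rewrite (vok_owner (V5 (bar xe))) (vok_owner (V6 (bar xe))).
move: Ct Ch Cc Cn.
case: w => [[v|v]|[[[]|[]]|[u|l]]] /= => Ct Ch Cc Cn.
all: lia.
Qed.

Lemma Lall_ok i : List.In i Lall -> inst_ok bar (imap fst i).
Proof.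
have HS1 := in_S1; have HS2 := in_S2; have HS3 := in_S3.
have Ht j : List.In j S -> inst_ok bar (imap fst (ibt j)).
  move=> Hj; rewrite ibind_at ?S_atom // imap_comp (@imap_ext _ _ _ fst) //; exact: Hok.
have Hh j : List.In j S -> inst_ok bar (imap fst (ibh j)).
  move=> Hj; rewrite ibind_at ?S_atom // imap_comp (@imap_ext _ _ _ fst) //; exact: Hok.
rewrite /Lall /Lt /Lh /Lcocon /Lcon => H.
repeat match goal with
| H : List.In _ (_ ++ _) |- _ => case: (In_cat H) => {}H
| H : List.In _ (_ :: _) |- _ => case: (In_consE H) => [<-|{}H]
| H : List.In _ [::] |- _ => case: H
| H : List.In _ (map _ _) |- _ => case: (In_mapE H) => ? [<- {}H]
end.
all: first [ by [] | by split | by apply: Ht; auto | by apply: Hh; auto ].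
Qed.

Lemma construct : exists sP, good (F := C) (fmap mU a') sP (fmap mL b') /\
  (forall st, List.In st sP -> inst_ok bar (imap fst st.2)).
Proof.
have [sP [Hd HA]] := R_all; exists sP; split.
- split => //; [exact: exact_prem|exact: exact_concl| |]; rewrite HA.
  + exact: Lall_vok.
  + exact: Lall_cnt.
- move=> st Hst; case Ha: (isatom st.2).
  + by apply: Lall_ok; rewrite -HA; apply: AI_In.
  + by move: Ha; case: (st.2).
Qed.

End Main.


Lemma In_app_iff T (x : T) l1 l2 : List.In x (l1 ++ l2) <-> List.In x l1 \/ List.In x l2.
Proof. exact: List.in_app_iff. Qed.

Lemma fatoms_plug_In X (c : ctx X) x p :
  List.In p (fatoms (plug c x)) <-> List.In p (fatoms (plug c Ff)) \/ List.In p (fatoms x).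
Proof.
elim: c => /= [|c IH b|b c IH|c IH b|b c IH]; try tauto;
  rewrite !In_app_iff ?IH; tauto.
Qed.

Lemma na_atoms X (i : inst X) p : isatom i = false ->
  (List.In p (fatoms (icon i)) <-> List.In p (fatoms (ipre i))).
Proof.
case: i => //= [a b c|a b c d|q [] a b c] _; rewrite ?In_app_iff; try tauto;
  case: q => /=; rewrite ?In_app_iff /=; tauto.
Qed.

Lemma persist X (a : fml X) s b p : deriv a s b -> List.In p (fatoms b) ->
  List.In p (fatoms a) \/ exists q1 c j q2, [/\ s = q1 ++ (c, j) :: q2, isatom j & List.In p (fatoms (icon j))].
Proof.
elim=> [a0|c i s0 b0 _ IH] Hp; first by left.
case: (IH Hp) => [H|[q1 [c' [j [q2 [E Hj Hpj]]]]]]; last first.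
  by right; exists ((c, i) :: q1), c', j, q2; rewrite E.
case/fatoms_plug_In: H => H.
- by left; apply/fatoms_plug_In; left.
- case Ha: (isatom i).
  + by right; exists [::], c, i, s0.
  + by left; apply/fatoms_plug_In; right; apply/(na_atoms _ Ha).
Qed.

Lemma count_pos_In T (P : pred T) l : 0 < count P l -> exists x, List.In x l /\ P x.
Proof.
elim: l => //= y l IH; case Py: (P y) => /= H; first by exists y; split => //; left.
by have [x [Hx Px]] := IH H; exists x; split => //; right.
Qed.

Lemma AI_cons X c (i : inst X) s : isatom i -> AI ((c, i) :: s) = i :: AI s.
Proof. by rewrite /AI /= => ->. Qed.

Lemma labels2 A (E : eqType) (x y : A * E) (P : E -> Prop) e1 e2 :
  exact_labels [:: x.2; y.2] P -> P e1 -> P e2 -> e1 != e2 ->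
  (x.2 = e1 /\ y.2 = e2) \/ (x.2 = e2 /\ y.2 = e1).
Proof.
move=> [Hu Hm] H1 H2 H12; move/Hm: H1; move/Hm: H2; rewrite !inE.
move: Hu; rewrite /= inE andbT => Hxy.
case/orP => /eqP E2; case/orP => /eqP E1; subst.
- by rewrite eqxx in H12.
- by right.
- by left.
- by rewrite eqxx in H12.
Qed.

Lemma In_sub3 T (x y z : T) l1 l2 l3 :
  List.In x (l1 ++ l2 ++ l3) -> List.In x (l1 ++ y :: (l2 ++ z :: l3)).
Proof. rewrite !In_app_iff /= !In_app_iff /=; tauto. Qed.

Lemma In2 (E : eqType) (e a b : E) : e \in [:: a; b] -> e = a \/ e = b.
Proof. by rewrite !inE => /orP [] /eqP; auto. Qed.

Unset Implicit Arguments.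

Theorem theorem5p3 (A : Type) (bar : A -> A)
  (bar_inv : involutive bar) (bar_nofix : forall a, bar a <> a)
  (B C : flow) (a b : fml A) (s : seq (step A)) :
  se_red B C -> sks_deriv bar a s b -> flow_of a s B ->
  exists s' : seq (step A), sks_deriv bar a s' b /\ flow_of a s' C.
Proof.
move=> [HB [iota [kappa [eps [e2 [e3 [[Hli Hlk Hue Hle] [Hu2 Hl3 Hiso]]]]]]]] [Hds Hoks] Hfl.
have [a' [s' [b' [Ha Hs [Hd' Hpre Hcon Hv Hcnt]]]]] := flow_good Hfl.
have Hb : fmap fst b' = b.
  by apply: (deriv_det (deriv_map fst Hd')); rewrite Ha Hs.
have Hok' : forall i, List.In i (AI s') -> inst_ok bar (imap fst i).
  move=> i /In_AI [st [Hst <- _]]; have [k Hk Ek] := In_nth (dstep _) Hst.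
  have := Hoks k (ltac:(by rewrite -Hs size_map)).
  by rewrite -Hs (dstep_map _ B) (nth_map (dstep _)) // Ek.
have Hik : iota != kappa by apply/eqP => E; move: Hli; rewrite E Hlk.
have [ik [Hik_in Hik_own]] : exists ik, List.In ik (AI s') /\ owner ik = Some kappa.
  have := Hcnt kappa => H1; have [ik [H2 H3]] := @count_pos_In _ (fun i => owner (F := B) i == Some kappa) (AI s') (ltac:(by rewrite H1)).
  by exists ik; split => //; apply/eqP.
have [stk [Hstk Ek Hak]] := In_AI Hik_in.
have [l1 [l3 Es0]] := List.in_split _ _ Hstk.
have Es' : s' = cat l1 (stk :: l3) := Es0; clear Es0.
case: stk Es' Hstk Ek => ck ik0 Es' _ /= Ek; subst ik0.
have [vk Hvk] := Hv _ Hik_in.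
have Evk : vk = kappa by move: (vok_owner Hvk); rewrite Hik_own => -[].
subst vk.
have Hok_k := Hok' _ Hik_in.
case: Hvk => Hlk' Hprek Hconk.
have [xe Hikk] : exists xe, ik = ICut (xe, eps) (bar xe, val e3) \/ ik = ICut (bar xe, val e3) (xe, eps).
  rewrite Hlk in Hlk'.
  case: ik Hlk' Hprek Hok_k {Hik_in Hik_own Hak Es' Hconk} => // -[x1 x2] [y1 y2] _ Hpk /= Hok_k.
  have Hne : eps != val e3 by rewrite eq_sym (valP e3).
  case: (labels2 Hpk Hle Hl3 Hne) => /= -[-> ->].
  - by exists x1; left; rewrite Hok_k.
  - by exists y1; right; rewrite Hok_k bar_inv.
have Hxk : List.In (xe, eps) (fatoms (ipre ik)) by case: Hikk => -> /=; tauto.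
move: Hd'; rewrite Es' => /deriv_split [m [Hm1 /deriv_consI [Em Hd3]]]; subst m.
have Hp : List.In (xe, eps) (fatoms (plug ck (ipre ik))) by apply/fatoms_plug_In; right.
case: (persist Hm1 Hp) => [Hpa|[q1 [ci [ii [q2 [El1 Hai Hxi]]]]]].
  by move/In_labels/(proj2 Hpre): Hpa; rewrite Hue.
have Hii_in : List.In ii (AI s').
  apply: (AI_In (st := (ci, ii))) => //; rewrite Es' El1 -catA.
  by apply/In_app_iff; right; left.
have [vi Hvi] := Hv _ Hii_in.
have Hoi := vok_owner Hvi.
case: Hvi Hoi => Hli' Hprei Hconi Hoi.
have Evi : vi = iota.
  by have := (proj2 Hconi eps).1 (In_labels Hxi); rewrite Hue => -[].
subst vi.
have Hok_i := Hok' _ Hii_in.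
have Hne2 : eps != val e2 by rewrite eq_sym (valP e2).
have Hne3 : eps != val e3 by rewrite eq_sym (valP e3).
have Hii : ii = IInt (xe, eps) (bar xe, val e2) \/ ii = IInt (bar xe, val e2) (xe, eps).
  rewrite Hli in Hli'.
  case: ii Hli' Hconi Hok_i Hxi {Hii_in Hoi El1 Hai Hprei} => // -[x1 x2] [y1 y2] _ Hpk /= Hok_i Hxi.
  case: (labels2 Hpk Hue Hu2 Hne2) => /= -[E1 E2]; subst x2 y2.
  - case: Hxi => [E|[E|[]]]; last by case: E => _ E; exfalso; move/eqP: Hne2; apply; symmetry; exact E.
    by case: E => E; left; rewrite Hok_i E.
  - case: Hxi => [E|[E|[]]]; first by case: E => _ E; exfalso; move/eqP: Hne2; apply; symmetry; exact E.
    by case: E => E; right; rewrite -E Hok_i bar_inv.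
have Hupi : forall e, up e = Some iota -> e = eps \/ e = val e2.
  move=> e /(proj2 Hconi e); case: Hii => -> /= /In2; tauto.
have Hnoli : forall e, lo e <> Some iota.
  by move=> e /(proj2 Hprei e); case: Hii => ->.
have Hlok : forall e, lo e = Some kappa -> e = eps \/ e = val e3.
  move=> e /(proj2 Hprek e); case: Hikk => -> /= /In2; tauto.
have Hnouk : forall e, up e <> Some kappa.
  by move=> e /(proj2 Hconk e); case: Hikk => ->.
have HAI : AI s' = AI q1 ++ ii :: (AI q2 ++ ik :: AI l3).
  by rewrite Es' El1 -catA AI_cat /= AI_cons // AI_cat AI_cons.
have HvS : forall i, List.In i (AI q1 ++ AI q2 ++ AI l3) -> exists v, vok i v.
  by move=> i Hi; apply: Hv; rewrite HAI; apply: In_sub3.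
have HokS : forall i, List.In i (AI q1 ++ AI q2 ++ AI l3) -> inst_ok bar (imap fst i).
  by move=> i Hi; apply: Hok'; rewrite HAI; apply: In_sub3.
have HcntS : forall v, count (fun i => owner (F := B) i == Some v) (AI q1 ++ AI q2 ++ AI l3)
    = ((v != iota) && (v != kappa)).
  move=> v; have := Hcnt v; rewrite HAI !count_cat /= !count_cat /= Hoi Hik_own.
  have Hsk : (Some kappa == Some iota) = false by apply/eqP => -[] E; move: Hik; rewrite E eqxx.
  have Hsi : (Some iota == Some kappa) = false by apply/eqP => -[] E; move: Hik; rewrite E eqxx.
  case: (v =P iota) => [->|/eqP Hiv].
    by rewrite !eqxx ?Hsk ?Hsi /=; lia.
  case: (v =P kappa) => [->|/eqP Hkv].
    by rewrite !eqxx ?Hsk ?Hsi ?(negbTE Hik) ?andbF /=; lia.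
  have -> : (Some iota == Some v) = false by apply/eqP => -[] E; move: Hiv; rewrite E eqxx.
  have -> : (Some kappa == Some v) = false by apply/eqP => -[] E; move: Hkv; rewrite E eqxx.
  lia.
rewrite El1 in Hm1; case/deriv_split: Hm1 => m [Hd1 /deriv_consI [Em Hd2]]; subst m.
have [sP [Hg HokP]] := construct Hue Hle Hik Hu2 Hl3 Hupi Hlok Hnouk Hnoli Hd1 Hd2 Hd3 Hii Hikk
  Hpre Hcon HvS HcntS HokS.
have Hf := flow_iso_of Hiso (good_flow Hg).
have Ea : fmap fst (fmap (mU (iota := iota) (kappa := kappa) e2 e3) a') = a.
  by rewrite fmap_comp -Ha; apply: fmap_ext.
have Eb : fmap fst (fmap (mL (iota := iota) (kappa := kappa) e2 e3) b') = b.
  by rewrite fmap_comp -Hb; apply: fmap_ext.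
exists (map (smap fst) sP); split; last by rewrite -Ea.
case: Hg => HdP _ _ _ _; split.
- by rewrite -Ea -Eb; apply: deriv_map.
- move=> k; rewrite size_map => Hk.
  rewrite (dstep_map _ (se_build e2 e3)) (nth_map (dstep _)) //.
  exact: HokP (nth_In _ Hk).
Qed.
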